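(* Let $C_{abcd}$ be a Weyl tensor at a point of a spacetime with metric $g_{ab}$ of signature $(+,-,-,-)$, let $T_{abcd}$ be its Bel–Robinson tensor, and let $I=\Psi_{ABCD}\Psi^{ABCD}$ where $\Psi_{ABCD}$ is the Weyl spinor. For a unit timelike vector $t^a$ (i.e. $g_{ab}t^at^b=1$) put $P_1(t^a)=T_{abcd}t^at^bt^ct^d$. Then $4P_1(t^a)\geq |I|$ for every unit timelike vector $t^a$. Moreover, $4P_1(t^a)=|I|$ if and only if there exists $\theta\in\mathbb R$ such that ${}^{(\theta)}C_{abcd}t^bt^c=0$, where ${}^{(\theta)}C_{abcd}=\cos(\theta)\,C_{abcd}+\sin(\theta)\,{}^{*}C_{abcd}$.
   Context: ${}^{*}C_{abcd}$ denotes the (Hodge) dual of the Weyl tensor. The Weyl spinor $\Psi_{ABCD}$ is the totally symmetric spinor with $C_{abcd}=\Psi_{ABCD}\epsilon_{A'B'}\epsilon_{C'D'}+\bar\Psi_{A'B'C'D'}\epsilon_{AB}\epsilon_{CD}$, and the Bel–Robinson tensor is $T_{abcd}=\Psi_{ABCD}\bar\Psi_{A'B'C'D'}$ (Penrose–Rindler conventions). *)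

(* Defs.v *)
From HB Require Import structures.
From mathcomp Require Import all_boot all_order all_algebra.
From mathcomp Require Import reals trigo.
From mathcomp Require Import complex.

Set Implicit Arguments.
Unset Strict Implicit.
Unset Printing Implicit Defensive.

Import Order.TTheory GRing.Theory Num.Theory.
Local Open Scope ring_scope.

(* Everything is expressed at a single point, in an orthonormal frame
   (e_0 timelike) of the tangent space, so that the metric g_ab has
   components eta = diag(1,-1,-1,-1).  All tensors below are
   given by their components with ALL indices DOWN unless said otherwise. *)

Section Defs.
Variable R : realType.

Definition tensor4 := 'I_4 -> 'I_4 -> 'I_4 -> 'I_4 -> R.

(* Minkowski metric g_ab (numerically equal to its inverse g^ab). *)
Definition eta (a b : 'I_4) : R :=
  if a == b then (if a == 0 :> 'I_4 then 1 else -1) else 0.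

Definition is_weyl (C : tensor4) : Prop :=
  [/\ (forall a b c d, C a b c d = - C b a c d),
      (forall a b c d, C a b c d = - C a b d c),
      (forall a b c d, C a b c d = C c d a b),
      (forall a b c d, C a b c d + C a c d b + C a d b c = 0) &
      (forall b d, \sum_(a < 4) \sum_(c < 4) eta a c * C a b c d = 0)].

(* Levi-Civita symbol e_abcd with e_0123 = 1 (the opposite orientation only
   replaces *C by -*C, which does not affect the statement). *)
Definition levi (a b c d : 'I_4) : R :=
  \det (\matrix_(i < 4, j < 4) ((j == tnth [tuple a; b; c; d] i)%:R : R)).

Definition hdual (C : tensor4) : tensor4 := fun a b c d =>
  2^-1 * \sum_(e < 4) \sum_(f < 4) \sum_(g < 4) \sum_(h < 4)
     levi a b g h * eta g e * eta h f * C e f c d.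

Definition rotC (th : R) (C : tensor4) : tensor4 := fun a b c d =>
  cos th * C a b c d + sin th * hdual C a b c d.

(* ---- spinors (Penrose--Rindler conventions) ---- *)
Definition cr (x : R) : R[i] := Complex x 0.

(* epsilon_{AB} = epsilon^{AB}, with epsilon_{01} = 1 *)
Definition epsS (A B : 'I_2) : R[i] :=
  if (A == 0) && (B == 1) then 1 else if (A == 1) && (B == 0) then -1 else 0.

(* Infeld--van der Waerden symbols sigma^a_{AA'}: V_{AA'} = sigma^a_{AA'} V_a.
   They satisfy g_ab sigma^a_{AA'} sigma^b_{BB'} = eps_AB eps_A'B'. *)
Definition sigma (a : 'I_4) (A A' : 'I_2) : R[i] :=
  cr (Num.sqrt 2)^-1 *
  match val a with
  | 0%N => if A == A' then 1 else 0
  | 1%N => if A == A' then 0 else 1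
  | 2%N => if A == A' then 0 else (if A == 0 then Complex 0 1 else Complex 0 (-1))
  | _ => if A == A' then (if A == 0 then 1 else -1) else 0
  end.

(* sigma_a^{AA'} = g_ab eps^{AB} eps^{A'B'} sigma^b_{BB'}:  T_a = sigma_a^{AA'} T_{AA'} *)
Definition sigmaU (a : 'I_4) (A A' : 'I_2) : R[i] :=
  \sum_(b < 4) \sum_(B < 2) \sum_(B' < 2)
     cr (eta a b) * epsS A B * epsS A' B' * sigma b B B'.

(* Weyl spinor: Psi_ABCD = 1/4 C_{AA'BB'CC'DD'} eps^{A'B'} eps^{C'D'},
   the unique totally symmetric spinor with
   C_abcd = Psi_ABCD eps_A'B' eps_C'D' + conj(Psi)_A'B'C'D' eps_AB eps_CD. *)
Definition weyl_spinor (C : tensor4) (A B C' D : 'I_2) : R[i] :=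
  (cr 4)^-1 *
  \sum_(A1 < 2) \sum_(B1 < 2) \sum_(C1 < 2) \sum_(D1 < 2)
  \sum_(a < 4) \sum_(b < 4) \sum_(c < 4) \sum_(d < 4)
    cr (C a b c d) * sigma a A A1 * sigma b B B1 * sigma c C' C1 * sigma d D D1
      * epsS A1 B1 * epsS C1 D1.

(* I = Psi_ABCD Psi^ABCD, indices raised by kappa^A = eps^{AB} kappa_B *)
Definition invI (C : tensor4) : R[i] :=
  \sum_(A < 2) \sum_(B < 2) \sum_(C' < 2) \sum_(D < 2)
    weyl_spinor C A B C' D *
    \sum_(E < 2) \sum_(F < 2) \sum_(G < 2) \sum_(H < 2)
      epsS A E * epsS B F * epsS C' G * epsS D H * weyl_spinor C E F G H.

(* Bel--Robinson tensor T_abcd = Psi_ABCD conj(Psi)_A'B'C'D' (tensor form) *)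
Definition bel_robinson (C : tensor4) (a b c d : 'I_4) : R[i] :=
  \sum_(A < 2) \sum_(B < 2) \sum_(C' < 2) \sum_(D < 2)
  \sum_(A1 < 2) \sum_(B1 < 2) \sum_(C1 < 2) \sum_(D1 < 2)
    weyl_spinor C A B C' D * conjc (weyl_spinor C A1 B1 C1 D1)
    * sigmaU a A A1 * sigmaU b B B1 * sigmaU c C' C1 * sigmaU d D D1.

(* P_1(t) = T_abcd t^a t^b t^c t^d  (t given by its contravariant components) *)
Definition P1 (C : tensor4) (t : 'I_4 -> R) : R[i] :=
  \sum_(a < 4) \sum_(b < 4) \sum_(c < 4) \sum_(d < 4)
    bel_robinson C a b c d * cr (t a * t b * t c * t d).

Definition minkowski_sq (t : 'I_4 -> R) : R :=
  \sum_(a < 4) \sum_(b < 4) eta a b * t a * t b.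

End Defs.

(* Main.v *)
Require Import Defs.
From HB Require Import structures.
From mathcomp Require Import all_boot all_order all_algebra.
From mathcomp Require Import reals trigo.
From mathcomp Require Import complex.
From mathcomp Require Import fingroup perm.
From mathcomp Require Import ring lra.
From Stdlib Require Import FunctionalExtensionality.
Import Order.TTheory GRing.Theory Num.Theory.
Local Open Scope ring_scope.

Notation o40 := (@Ordinal 4 0 (erefl true)).
Notation o41 := (@Ordinal 4 1 (erefl true)).
Notation o42 := (@Ordinal 4 2 (erefl true)).
Notation o43 := (@Ordinal 4 3 (erefl true)).
Notation o20 := (@Ordinal 2 0 (erefl true)).
Notation o21 := (@Ordinal 2 1 (erefl true)).

Lemma case4 (a : 'I_4) : a = o40 \/ a = o41 \/ a = o42 \/ a = o43.
Proof.
case: a => [[|[|[|[|n]]]] h]; try (by left; apply/val_inj);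
try (by right; left; apply/val_inj); try (by right; right; left; apply/val_inj);
try (by right; right; right; apply/val_inj).
Qed.
Lemma case2 (a : 'I_2) : a = o20 \/ a = o21.
Proof.
case: a => [[|[|n]] h]; try (by left; apply/val_inj);
try (by right; apply/val_inj).
Qed.

Lemma big4 (V : nmodType) (F : 'I_4 -> V) : \sum_(i < 4) F i = F o40 + F o41 + F o42 + F o43.
Proof.
rewrite !big_ord_recr big_ord0 /= add0r.
by congr (_ + _ + _ + _); congr F; apply/val_inj.
Qed.
Lemma big2 (V : nmodType) (F : 'I_2 -> V) : \sum_(i < 2) F i = F o20 + F o21.
Proof.
rewrite !big_ord_recr big_ord0 /= add0r.
by congr (_ + _); congr F; apply/val_inj.
Qed.

Definition lmx (R : realType) (a b c d : 'I_4) : 'M[R]_4 :=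
  \matrix_(i < 4, j < 4) ((j == tnth [tuple a; b; c; d] i)%:R : R).
Lemma levi_lmx R a b c d : levi R a b c d = \det (lmx R a b c d).
Proof. by []. Qed.

Lemma tnth4 (T : Type) (a b c d : T) (i : 'I_4) :
  tnth [tuple a; b; c; d] i = if val i == 0%N then a else if val i == 1%N then b
     else if val i == 2%N then c else d.
Proof. by case: (case4 i) => [->|[->|[->|->]]]. Qed.

Lemma det_swap (R : realType) (A : 'M[R]_4) (i1 i2 : 'I_4) : i1 != i2 ->
  \det (xrow i1 i2 A) = - \det A.
Proof.
move=> h; rewrite xrowE det_mulmx /tperm_mx det_perm odd_tperm h /=.
by rewrite expr1 mulN1r.
Qed.

Lemma lmx_swap (R : realType) (i1 i2 : 'I_4) (x y : 4.-tuple 'I_4) :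
  (forall i, tnth y i = tnth x (tperm i1 i2 i)) ->
  \matrix_(i < 4, j < 4) ((j == tnth y i)%:R : R) = xrow i1 i2 (\matrix_(i < 4, j < 4) ((j == tnth x i)%:R : R)).
Proof. by move=> h; apply/matrixP => i j; rewrite /xrow !mxE h. Qed.

Ltac tp := rewrite ?tpermL ?tpermR ?tpermD //.
Lemma levi_sw01 R a b c d : levi R b a c d = - levi R a b c d.
Proof.
rewrite /levi (@lmx_swap R o40 o41 [tuple a; b; c; d]); first by rewrite det_swap.
by move=> i; case: (case4 i) => [->|[->|[->|->]]]; tp.
Qed.
Lemma levi_sw12 R a b c d : levi R a c b d = - levi R a b c d.
Proof.
rewrite /levi (@lmx_swap R o41 o42 [tuple a; b; c; d]); first by rewrite det_swap.
by move=> i; case: (case4 i) => [->|[->|[->|->]]]; tp.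
Qed.
Lemma levi_sw23 R a b c d : levi R a b d c = - levi R a b c d.
Proof.
rewrite /levi (@lmx_swap R o42 o43 [tuple a; b; c; d]); first by rewrite det_swap.
by move=> i; case: (case4 i) => [->|[->|[->|->]]]; tp.
Qed.
Lemma levi_alt R a b c d (i1 i2 : 'I_4) : i1 != i2 ->
  tnth [tuple a; b; c; d] i1 = tnth [tuple a; b; c; d] i2 -> levi R a b c d = 0.
Proof.
move=> h e; rewrite /levi; apply: (determinant_alternate h) => j.
by rewrite !mxE e.
Qed.
Lemma levi_rep01 R a c d : levi R a a c d = 0. Proof. exact: (@levi_alt R _ _ _ _ o40 o41). Qed.
Lemma levi_rep02 R a b d : levi R a b a d = 0. Proof. exact: (@levi_alt R _ _ _ _ o40 o42). Qed.
Lemma levi_rep03 R a b c : levi R a b c a = 0. Proof. exact: (@levi_alt R _ _ _ _ o40 o43). Qed.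
Lemma levi_rep12 R a b d : levi R a b b d = 0. Proof. exact: (@levi_alt R _ _ _ _ o41 o42). Qed.
Lemma levi_rep13 R a b c : levi R a b c b = 0. Proof. exact: (@levi_alt R _ _ _ _ o41 o43). Qed.
Lemma levi_rep23 R a b c : levi R a b c c = 0. Proof. exact: (@levi_alt R _ _ _ _ o42 o43). Qed.
Lemma levi_id R : levi R o40 o41 o42 o43 = 1.
Proof.
rewrite /levi; transitivity (\det (1%:M : 'M[R]_4)); last exact: det1.
congr (\det _); apply/matrixP => i j; rewrite !mxE.
by case: (case4 i) => [->|[->|[->|->]]]; case: (case4 j) => [->|[->|[->|->]]].
Qed.
Definition lv (R : realType) (a b c d : 'I_4) : R :=
  match nat_of_ord a, nat_of_ord b, nat_of_ord c, nat_of_ord d with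
  | 0,1,2,3 => 1
  | 0,1,3,2 => -1
  | 0,2,1,3 => -1
  | 0,2,3,1 => 1
  | 0,3,1,2 => 1
  | 0,3,2,1 => -1
  | 1,0,2,3 => -1
  | 1,0,3,2 => 1
  | 1,2,0,3 => 1
  | 1,2,3,0 => -1
  | 1,3,0,2 => -1
  | 1,3,2,0 => 1
  | 2,0,1,3 => 1
  | 2,0,3,1 => -1
  | 2,1,0,3 => -1
  | 2,1,3,0 => 1
  | 2,3,0,1 => 1
  | 2,3,1,0 => -1
  | 3,0,1,2 => -1
  | 3,0,2,1 => 1
  | 3,1,0,2 => 1
  | 3,1,2,0 => -1
  | 3,2,0,1 => -1
  | 3,2,1,0 => 1
  | _,_,_,_ => 0
  end.

Lemma levi_tab (R : realType) a b c d : levi R a b c d = lv R a b c d.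
Proof.
case: (case4 a) => [->|[->|[->|->]]]; case: (case4 b) => [->|[->|[->|->]]];
case: (case4 c) => [->|[->|[->|->]]]; case: (case4 d) => [->|[->|[->|->]]].
- by rewrite levi_rep01.
- by rewrite levi_rep01.
- by rewrite levi_rep01.
- by rewrite levi_rep01.
- by rewrite levi_rep01.
- by rewrite levi_rep01.
- by rewrite levi_rep01.
- by rewrite levi_rep01.
- by rewrite levi_rep01.
- by rewrite levi_rep01.
- by rewrite levi_rep01.
- by rewrite levi_rep01.
- by rewrite levi_rep01.
- by rewrite levi_rep01.
- by rewrite levi_rep01.
- by rewrite levi_rep01.
- by rewrite levi_rep02.
- by rewrite levi_rep02.
- by rewrite levi_rep02.
- by rewrite levi_rep02.
- by rewrite levi_rep03.
- by rewrite levi_rep12.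
- by rewrite levi_rep12.
- by rewrite levi_rep12.
- by rewrite levi_rep03.
- by rewrite levi_rep13.
- by rewrite levi_rep23.
- by rewrite levi_id.
- by rewrite levi_rep03.
- by rewrite levi_rep13.
- by rewrite (levi_sw23 R o40 o41 o42 o43) levi_id /= ?opprK.
- by rewrite levi_rep23.
- by rewrite levi_rep02.
- by rewrite levi_rep02.
- by rewrite levi_rep02.
- by rewrite levi_rep02.
- by rewrite levi_rep03.
- by rewrite levi_rep23.
- by rewrite levi_rep13.
- by rewrite (levi_sw12 R o40 o41 o42 o43) levi_id /= ?opprK.
- by rewrite levi_rep03.
- by rewrite levi_rep12.
- by rewrite levi_rep12.
- by rewrite levi_rep12.
- by rewrite levi_rep03.
- by rewrite (levi_sw23 R o40 o42 o41 o43) (levi_sw12 R o40 o41 o42 o43) levi_id /= ?opprK.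
- by rewrite levi_rep13.
- by rewrite levi_rep23.
- by rewrite levi_rep02.
- by rewrite levi_rep02.
- by rewrite levi_rep02.
- by rewrite levi_rep02.
- by rewrite levi_rep03.
- by rewrite levi_rep23.
- by rewrite (levi_sw12 R o40 o41 o43 o42) (levi_sw23 R o40 o41 o42 o43) levi_id /= ?opprK.
- by rewrite levi_rep13.
- by rewrite levi_rep03.
- by rewrite (levi_sw12 R o40 o42 o43 o41) (levi_sw23 R o40 o42 o41 o43) (levi_sw12 R o40 o41 o42 o43) levi_id /= ?opprK.
- by rewrite levi_rep23.
- by rewrite levi_rep13.
- by rewrite levi_rep03.
- by rewrite levi_rep12.
- by rewrite levi_rep12.
- by rewrite levi_rep12.
- by rewrite levi_rep12.
- by rewrite levi_rep03.
- by rewrite levi_rep12.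
- by rewrite levi_rep12.
- by rewrite levi_rep02.
- by rewrite levi_rep02.
- by rewrite levi_rep02.
- by rewrite levi_rep02.
- by rewrite levi_rep13.
- by rewrite levi_rep03.
- by rewrite levi_rep23.
- by rewrite (levi_sw01 R o40 o41 o42 o43) levi_id /= ?opprK.
- by rewrite levi_rep13.
- by rewrite levi_rep03.
- by rewrite (levi_sw01 R o40 o41 o43 o42) (levi_sw23 R o40 o41 o42 o43) levi_id /= ?opprK.
- by rewrite levi_rep23.
- by rewrite levi_rep01.
- by rewrite levi_rep01.
- by rewrite levi_rep01.
- by rewrite levi_rep01.
- by rewrite levi_rep01.
- by rewrite levi_rep01.
- by rewrite levi_rep01.
- by rewrite levi_rep01.
- by rewrite levi_rep01.
- by rewrite levi_rep01.
- by rewrite levi_rep01.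
- by rewrite levi_rep01.
- by rewrite levi_rep01.
- by rewrite levi_rep01.
- by rewrite levi_rep01.
- by rewrite levi_rep01.
- by rewrite levi_rep23.
- by rewrite levi_rep03.
- by rewrite levi_rep13.
- by rewrite (levi_sw12 R o41 o40 o42 o43) (levi_sw01 R o40 o41 o42 o43) levi_id /= ?opprK.
- by rewrite levi_rep02.
- by rewrite levi_rep02.
- by rewrite levi_rep02.
- by rewrite levi_rep02.
- by rewrite levi_rep12.
- by rewrite levi_rep03.
- by rewrite levi_rep12.
- by rewrite levi_rep12.
- by rewrite (levi_sw23 R o41 o42 o40 o43) (levi_sw12 R o41 o40 o42 o43) (levi_sw01 R o40 o41 o42 o43) levi_id /= ?opprK.
- by rewrite levi_rep03.
- by rewrite levi_rep13.
- by rewrite levi_rep23.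
- by rewrite levi_rep23.
- by rewrite levi_rep03.
- by rewrite (levi_sw12 R o41 o40 o43 o42) (levi_sw01 R o40 o41 o43 o42) (levi_sw23 R o40 o41 o42 o43) levi_id /= ?opprK.
- by rewrite levi_rep13.
- by rewrite levi_rep02.
- by rewrite levi_rep02.
- by rewrite levi_rep02.
- by rewrite levi_rep02.
- by rewrite (levi_sw12 R o41 o42 o43 o40) (levi_sw23 R o41 o42 o40 o43) (levi_sw12 R o41 o40 o42 o43) (levi_sw01 R o40 o41 o42 o43) levi_id /= ?opprK.
- by rewrite levi_rep03.
- by rewrite levi_rep23.
- by rewrite levi_rep13.
- by rewrite levi_rep12.
- by rewrite levi_rep03.
- by rewrite levi_rep12.
- by rewrite levi_rep12.
- by rewrite levi_rep12.
- by rewrite levi_rep12.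
- by rewrite levi_rep03.
- by rewrite levi_rep12.
- by rewrite levi_rep13.
- by rewrite levi_rep23.
- by rewrite levi_rep03.
- by rewrite (levi_sw01 R o40 o42 o41 o43) (levi_sw12 R o40 o41 o42 o43) levi_id /= ?opprK.
- by rewrite levi_rep02.
- by rewrite levi_rep02.
- by rewrite levi_rep02.
- by rewrite levi_rep02.
- by rewrite levi_rep13.
- by rewrite (levi_sw01 R o40 o42 o43 o41) (levi_sw23 R o40 o42 o41 o43) (levi_sw12 R o40 o41 o42 o43) levi_id /= ?opprK.
- by rewrite levi_rep03.
- by rewrite levi_rep23.
- by rewrite levi_rep23.
- by rewrite levi_rep13.
- by rewrite levi_rep03.
- by rewrite (levi_sw01 R o41 o42 o40 o43) (levi_sw12 R o41 o40 o42 o43) (levi_sw01 R o40 o41 o42 o43) levi_id /= ?opprK.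
- by rewrite levi_rep12.
- by rewrite levi_rep12.
- by rewrite levi_rep03.
- by rewrite levi_rep12.
- by rewrite levi_rep02.
- by rewrite levi_rep02.
- by rewrite levi_rep02.
- by rewrite levi_rep02.
- by rewrite (levi_sw01 R o41 o42 o43 o40) (levi_sw23 R o41 o42 o40 o43) (levi_sw12 R o41 o40 o42 o43) (levi_sw01 R o40 o41 o42 o43) levi_id /= ?opprK.
- by rewrite levi_rep13.
- by rewrite levi_rep03.
- by rewrite levi_rep23.
- by rewrite levi_rep01.
- by rewrite levi_rep01.
- by rewrite levi_rep01.
- by rewrite levi_rep01.
- by rewrite levi_rep01.
- by rewrite levi_rep01.
- by rewrite levi_rep01.
- by rewrite levi_rep01.
- by rewrite levi_rep01.
- by rewrite levi_rep01.
- by rewrite levi_rep01.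
- by rewrite levi_rep01.
- by rewrite levi_rep01.
- by rewrite levi_rep01.
- by rewrite levi_rep01.
- by rewrite levi_rep01.
- by rewrite levi_rep23.
- by rewrite (levi_sw12 R o42 o40 o43 o41) (levi_sw01 R o40 o42 o43 o41) (levi_sw23 R o40 o42 o41 o43) (levi_sw12 R o40 o41 o42 o43) levi_id /= ?opprK.
- by rewrite levi_rep03.
- by rewrite levi_rep13.
- by rewrite (levi_sw12 R o42 o41 o43 o40) (levi_sw01 R o41 o42 o43 o40) (levi_sw23 R o41 o42 o40 o43) (levi_sw12 R o41 o40 o42 o43) (levi_sw01 R o40 o41 o42 o43) levi_id /= ?opprK.
- by rewrite levi_rep23.
- by rewrite levi_rep03.
- by rewrite levi_rep13.
- by rewrite levi_rep02.
- by rewrite levi_rep02.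
- by rewrite levi_rep02.
- by rewrite levi_rep02.
- by rewrite levi_rep12.
- by rewrite levi_rep12.
- by rewrite levi_rep03.
- by rewrite levi_rep12.
- by rewrite levi_rep12.
- by rewrite levi_rep12.
- by rewrite levi_rep12.
- by rewrite levi_rep03.
- by rewrite levi_rep13.
- by rewrite levi_rep23.
- by rewrite (levi_sw01 R o40 o43 o41 o42) (levi_sw12 R o40 o41 o43 o42) (levi_sw23 R o40 o41 o42 o43) levi_id /= ?opprK.
- by rewrite levi_rep03.
- by rewrite levi_rep13.
- by rewrite (levi_sw01 R o40 o43 o42 o41) (levi_sw12 R o40 o42 o43 o41) (levi_sw23 R o40 o42 o41 o43) (levi_sw12 R o40 o41 o42 o43) levi_id /= ?opprK.
- by rewrite levi_rep23.
- by rewrite levi_rep03.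
- by rewrite levi_rep02.
- by rewrite levi_rep02.
- by rewrite levi_rep02.
- by rewrite levi_rep02.
- by rewrite levi_rep23.
- by rewrite levi_rep13.
- by rewrite (levi_sw01 R o41 o43 o40 o42) (levi_sw12 R o41 o40 o43 o42) (levi_sw01 R o40 o41 o43 o42) (levi_sw23 R o40 o41 o42 o43) levi_id /= ?opprK.
- by rewrite levi_rep03.
- by rewrite levi_rep12.
- by rewrite levi_rep12.
- by rewrite levi_rep12.
- by rewrite levi_rep03.
- by rewrite (levi_sw01 R o41 o43 o42 o40) (levi_sw12 R o41 o42 o43 o40) (levi_sw23 R o41 o42 o40 o43) (levi_sw12 R o41 o40 o42 o43) (levi_sw01 R o40 o41 o42 o43) levi_id /= ?opprK.
- by rewrite levi_rep13.
- by rewrite levi_rep23.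
- by rewrite levi_rep03.
- by rewrite levi_rep02.
- by rewrite levi_rep02.
- by rewrite levi_rep02.
- by rewrite levi_rep02.
- by rewrite levi_rep23.
- by rewrite (levi_sw01 R o42 o43 o40 o41) (levi_sw12 R o42 o40 o43 o41) (levi_sw01 R o40 o42 o43 o41) (levi_sw23 R o40 o42 o41 o43) (levi_sw12 R o40 o41 o42 o43) levi_id /= ?opprK.
- by rewrite levi_rep13.
- by rewrite levi_rep03.
- by rewrite (levi_sw01 R o42 o43 o41 o40) (levi_sw12 R o42 o41 o43 o40) (levi_sw01 R o41 o42 o43 o40) (levi_sw23 R o41 o42 o40 o43) (levi_sw12 R o41 o40 o42 o43) (levi_sw01 R o40 o41 o42 o43) levi_id /= ?opprK.
- by rewrite levi_rep23.
- by rewrite levi_rep13.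
- by rewrite levi_rep03.
- by rewrite levi_rep12.
- by rewrite levi_rep12.
- by rewrite levi_rep12.
- by rewrite levi_rep03.
- by rewrite levi_rep02.
- by rewrite levi_rep02.
- by rewrite levi_rep02.
- by rewrite levi_rep02.
- by rewrite levi_rep01.
- by rewrite levi_rep01.
- by rewrite levi_rep01.
- by rewrite levi_rep01.
- by rewrite levi_rep01.
- by rewrite levi_rep01.
- by rewrite levi_rep01.
- by rewrite levi_rep01.
- by rewrite levi_rep01.
- by rewrite levi_rep01.
- by rewrite levi_rep01.
- by rewrite levi_rep01.
- by rewrite levi_rep01.
- by rewrite levi_rep01.
- by rewrite levi_rep01.
- by rewrite levi_rep01.
Qed.
Definition W (R : realType) (p : nat -> R) : tensor4 R := fun a b c d =>
  match nat_of_ord a, nat_of_ord b, nat_of_ord c, nat_of_ord d with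
  | 0,1,0,1 => ((1%:R / 2%:R) * p 8%N - p 4%N + (1%:R / 2%:R) * p 0%N)
  | 0,1,0,2 => (- (1%:R / 2%:R) * p 9%N + (1%:R / 2%:R) * p 1%N)
  | 0,1,0,3 => (p 6%N - p 2%N)
  | 0,1,1,0 => (- (1%:R / 2%:R) * p 8%N + p 4%N - (1%:R / 2%:R) * p 0%N)
  | 0,1,1,2 => (- p 7%N + p 3%N)
  | 0,1,1,3 => ((1%:R / 2%:R) * p 8%N - (1%:R / 2%:R) * p 0%N)
  | 0,1,2,0 => ((1%:R / 2%:R) * p 9%N - (1%:R / 2%:R) * p 1%N)
  | 0,1,2,1 => (p 7%N - p 3%N)
  | 0,1,2,3 => (- (1%:R / 2%:R) * p 9%N + p 5%N - (1%:R / 2%:R) * p 1%N)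
  | 0,1,3,0 => (- p 6%N + p 2%N)
  | 0,1,3,1 => (- (1%:R / 2%:R) * p 8%N + (1%:R / 2%:R) * p 0%N)
  | 0,1,3,2 => ((1%:R / 2%:R) * p 9%N - p 5%N + (1%:R / 2%:R) * p 1%N)
  | 0,2,0,1 => (- (1%:R / 2%:R) * p 9%N + (1%:R / 2%:R) * p 1%N)
  | 0,2,0,2 => (- (1%:R / 2%:R) * p 8%N - p 4%N - (1%:R / 2%:R) * p 0%N)
  | 0,2,0,3 => (- p 7%N - p 3%N)
  | 0,2,1,0 => ((1%:R / 2%:R) * p 9%N - (1%:R / 2%:R) * p 1%N)
  | 0,2,1,2 => (- p 6%N - p 2%N)
  | 0,2,1,3 => (- (1%:R / 2%:R) * p 9%N - p 5%N - (1%:R / 2%:R) * p 1%N)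
  | 0,2,2,0 => ((1%:R / 2%:R) * p 8%N + p 4%N + (1%:R / 2%:R) * p 0%N)
  | 0,2,2,1 => (p 6%N + p 2%N)
  | 0,2,2,3 => (- (1%:R / 2%:R) * p 8%N + (1%:R / 2%:R) * p 0%N)
  | 0,2,3,0 => (p 7%N + p 3%N)
  | 0,2,3,1 => ((1%:R / 2%:R) * p 9%N + p 5%N + (1%:R / 2%:R) * p 1%N)
  | 0,2,3,2 => ((1%:R / 2%:R) * p 8%N - (1%:R / 2%:R) * p 0%N)
  | 0,3,0,1 => (p 6%N - p 2%N)
  | 0,3,0,2 => (- p 7%N - p 3%N)
  | 0,3,0,3 => (2%:R * p 4%N)
  | 0,3,1,0 => (- p 6%N + p 2%N)
  | 0,3,1,2 => (- 2%:R * p 5%N)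
  | 0,3,1,3 => (p 6%N + p 2%N)
  | 0,3,2,0 => (p 7%N + p 3%N)
  | 0,3,2,1 => (2%:R * p 5%N)
  | 0,3,2,3 => (- p 7%N + p 3%N)
  | 0,3,3,0 => (- 2%:R * p 4%N)
  | 0,3,3,1 => (- p 6%N - p 2%N)
  | 0,3,3,2 => (p 7%N - p 3%N)
  | 1,0,0,1 => (- (1%:R / 2%:R) * p 8%N + p 4%N - (1%:R / 2%:R) * p 0%N)
  | 1,0,0,2 => ((1%:R / 2%:R) * p 9%N - (1%:R / 2%:R) * p 1%N)
  | 1,0,0,3 => (- p 6%N + p 2%N)
  | 1,0,1,0 => ((1%:R / 2%:R) * p 8%N - p 4%N + (1%:R / 2%:R) * p 0%N)
  | 1,0,1,2 => (p 7%N - p 3%N)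
  | 1,0,1,3 => (- (1%:R / 2%:R) * p 8%N + (1%:R / 2%:R) * p 0%N)
  | 1,0,2,0 => (- (1%:R / 2%:R) * p 9%N + (1%:R / 2%:R) * p 1%N)
  | 1,0,2,1 => (- p 7%N + p 3%N)
  | 1,0,2,3 => ((1%:R / 2%:R) * p 9%N - p 5%N + (1%:R / 2%:R) * p 1%N)
  | 1,0,3,0 => (p 6%N - p 2%N)
  | 1,0,3,1 => ((1%:R / 2%:R) * p 8%N - (1%:R / 2%:R) * p 0%N)
  | 1,0,3,2 => (- (1%:R / 2%:R) * p 9%N + p 5%N - (1%:R / 2%:R) * p 1%N)
  | 1,2,0,1 => (- p 7%N + p 3%N)
  | 1,2,0,2 => (- p 6%N - p 2%N)
  | 1,2,0,3 => (- 2%:R * p 5%N)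
  | 1,2,1,0 => (p 7%N - p 3%N)
  | 1,2,1,2 => (- 2%:R * p 4%N)
  | 1,2,1,3 => (- p 7%N - p 3%N)
  | 1,2,2,0 => (p 6%N + p 2%N)
  | 1,2,2,1 => (2%:R * p 4%N)
  | 1,2,2,3 => (- p 6%N + p 2%N)
  | 1,2,3,0 => (2%:R * p 5%N)
  | 1,2,3,1 => (p 7%N + p 3%N)
  | 1,2,3,2 => (p 6%N - p 2%N)
  | 1,3,0,1 => ((1%:R / 2%:R) * p 8%N - (1%:R / 2%:R) * p 0%N)
  | 1,3,0,2 => (- (1%:R / 2%:R) * p 9%N - p 5%N - (1%:R / 2%:R) * p 1%N)
  | 1,3,0,3 => (p 6%N + p 2%N)
  | 1,3,1,0 => (- (1%:R / 2%:R) * p 8%N + (1%:R / 2%:R) * p 0%N)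
  | 1,3,1,2 => (- p 7%N - p 3%N)
  | 1,3,1,3 => ((1%:R / 2%:R) * p 8%N + p 4%N + (1%:R / 2%:R) * p 0%N)
  | 1,3,2,0 => ((1%:R / 2%:R) * p 9%N + p 5%N + (1%:R / 2%:R) * p 1%N)
  | 1,3,2,1 => (p 7%N + p 3%N)
  | 1,3,2,3 => (- (1%:R / 2%:R) * p 9%N + (1%:R / 2%:R) * p 1%N)
  | 1,3,3,0 => (- p 6%N - p 2%N)
  | 1,3,3,1 => (- (1%:R / 2%:R) * p 8%N - p 4%N - (1%:R / 2%:R) * p 0%N)
  | 1,3,3,2 => ((1%:R / 2%:R) * p 9%N - (1%:R / 2%:R) * p 1%N)
  | 2,0,0,1 => ((1%:R / 2%:R) * p 9%N - (1%:R / 2%:R) * p 1%N)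
  | 2,0,0,2 => ((1%:R / 2%:R) * p 8%N + p 4%N + (1%:R / 2%:R) * p 0%N)
  | 2,0,0,3 => (p 7%N + p 3%N)
  | 2,0,1,0 => (- (1%:R / 2%:R) * p 9%N + (1%:R / 2%:R) * p 1%N)
  | 2,0,1,2 => (p 6%N + p 2%N)
  | 2,0,1,3 => ((1%:R / 2%:R) * p 9%N + p 5%N + (1%:R / 2%:R) * p 1%N)
  | 2,0,2,0 => (- (1%:R / 2%:R) * p 8%N - p 4%N - (1%:R / 2%:R) * p 0%N)
  | 2,0,2,1 => (- p 6%N - p 2%N)
  | 2,0,2,3 => ((1%:R / 2%:R) * p 8%N - (1%:R / 2%:R) * p 0%N)
  | 2,0,3,0 => (- p 7%N - p 3%N)
  | 2,0,3,1 => (- (1%:R / 2%:R) * p 9%N - p 5%N - (1%:R / 2%:R) * p 1%N)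
  | 2,0,3,2 => (- (1%:R / 2%:R) * p 8%N + (1%:R / 2%:R) * p 0%N)
  | 2,1,0,1 => (p 7%N - p 3%N)
  | 2,1,0,2 => (p 6%N + p 2%N)
  | 2,1,0,3 => (2%:R * p 5%N)
  | 2,1,1,0 => (- p 7%N + p 3%N)
  | 2,1,1,2 => (2%:R * p 4%N)
  | 2,1,1,3 => (p 7%N + p 3%N)
  | 2,1,2,0 => (- p 6%N - p 2%N)
  | 2,1,2,1 => (- 2%:R * p 4%N)
  | 2,1,2,3 => (p 6%N - p 2%N)
  | 2,1,3,0 => (- 2%:R * p 5%N)
  | 2,1,3,1 => (- p 7%N - p 3%N)
  | 2,1,3,2 => (- p 6%N + p 2%N)
  | 2,3,0,1 => (- (1%:R / 2%:R) * p 9%N + p 5%N - (1%:R / 2%:R) * p 1%N)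
  | 2,3,0,2 => (- (1%:R / 2%:R) * p 8%N + (1%:R / 2%:R) * p 0%N)
  | 2,3,0,3 => (- p 7%N + p 3%N)
  | 2,3,1,0 => ((1%:R / 2%:R) * p 9%N - p 5%N + (1%:R / 2%:R) * p 1%N)
  | 2,3,1,2 => (- p 6%N + p 2%N)
  | 2,3,1,3 => (- (1%:R / 2%:R) * p 9%N + (1%:R / 2%:R) * p 1%N)
  | 2,3,2,0 => ((1%:R / 2%:R) * p 8%N - (1%:R / 2%:R) * p 0%N)
  | 2,3,2,1 => (p 6%N - p 2%N)
  | 2,3,2,3 => (- (1%:R / 2%:R) * p 8%N + p 4%N - (1%:R / 2%:R) * p 0%N)
  | 2,3,3,0 => (p 7%N - p 3%N)
  | 2,3,3,1 => ((1%:R / 2%:R) * p 9%N - (1%:R / 2%:R) * p 1%N)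
  | 2,3,3,2 => ((1%:R / 2%:R) * p 8%N - p 4%N + (1%:R / 2%:R) * p 0%N)
  | 3,0,0,1 => (- p 6%N + p 2%N)
  | 3,0,0,2 => (p 7%N + p 3%N)
  | 3,0,0,3 => (- 2%:R * p 4%N)
  | 3,0,1,0 => (p 6%N - p 2%N)
  | 3,0,1,2 => (2%:R * p 5%N)
  | 3,0,1,3 => (- p 6%N - p 2%N)
  | 3,0,2,0 => (- p 7%N - p 3%N)
  | 3,0,2,1 => (- 2%:R * p 5%N)
  | 3,0,2,3 => (p 7%N - p 3%N)
  | 3,0,3,0 => (2%:R * p 4%N)
  | 3,0,3,1 => (p 6%N + p 2%N)
  | 3,0,3,2 => (- p 7%N + p 3%N)
  | 3,1,0,1 => (- (1%:R / 2%:R) * p 8%N + (1%:R / 2%:R) * p 0%N)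
  | 3,1,0,2 => ((1%:R / 2%:R) * p 9%N + p 5%N + (1%:R / 2%:R) * p 1%N)
  | 3,1,0,3 => (- p 6%N - p 2%N)
  | 3,1,1,0 => ((1%:R / 2%:R) * p 8%N - (1%:R / 2%:R) * p 0%N)
  | 3,1,1,2 => (p 7%N + p 3%N)
  | 3,1,1,3 => (- (1%:R / 2%:R) * p 8%N - p 4%N - (1%:R / 2%:R) * p 0%N)
  | 3,1,2,0 => (- (1%:R / 2%:R) * p 9%N - p 5%N - (1%:R / 2%:R) * p 1%N)
  | 3,1,2,1 => (- p 7%N - p 3%N)
  | 3,1,2,3 => ((1%:R / 2%:R) * p 9%N - (1%:R / 2%:R) * p 1%N)
  | 3,1,3,0 => (p 6%N + p 2%N)
  | 3,1,3,1 => ((1%:R / 2%:R) * p 8%N + p 4%N + (1%:R / 2%:R) * p 0%N)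
  | 3,1,3,2 => (- (1%:R / 2%:R) * p 9%N + (1%:R / 2%:R) * p 1%N)
  | 3,2,0,1 => ((1%:R / 2%:R) * p 9%N - p 5%N + (1%:R / 2%:R) * p 1%N)
  | 3,2,0,2 => ((1%:R / 2%:R) * p 8%N - (1%:R / 2%:R) * p 0%N)
  | 3,2,0,3 => (p 7%N - p 3%N)
  | 3,2,1,0 => (- (1%:R / 2%:R) * p 9%N + p 5%N - (1%:R / 2%:R) * p 1%N)
  | 3,2,1,2 => (p 6%N - p 2%N)
  | 3,2,1,3 => ((1%:R / 2%:R) * p 9%N - (1%:R / 2%:R) * p 1%N)
  | 3,2,2,0 => (- (1%:R / 2%:R) * p 8%N + (1%:R / 2%:R) * p 0%N)
  | 3,2,2,1 => (- p 6%N + p 2%N)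
  | 3,2,2,3 => ((1%:R / 2%:R) * p 8%N - p 4%N + (1%:R / 2%:R) * p 0%N)
  | 3,2,3,0 => (- p 7%N + p 3%N)
  | 3,2,3,1 => (- (1%:R / 2%:R) * p 9%N + (1%:R / 2%:R) * p 1%N)
  | 3,2,3,2 => (- (1%:R / 2%:R) * p 8%N + p 4%N - (1%:R / 2%:R) * p 0%N)
  | _,_,_,_ => 0
  end.

Definition pC (R : realType) (C : tensor4 R) (k : nat) : R :=
  match k with
  | 0 => (- (1%:R / 2%:R) * C o40 o42 o40 o42 - C o40 o41 o41 o43 + (1%:R / 2%:R) * C o40 o41 o40 o41)
  | 1 => (- (1%:R / 2%:R) * C o40 o42 o41 o43 - (1%:R / 2%:R) * C o40 o41 o42 o43 + C o40 o41 o40 o42)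
  | 2 => (- (1%:R / 2%:R) * C o40 o42 o41 o42 - (1%:R / 2%:R) * C o40 o41 o40 o43)
  | 3 => (- (1%:R / 2%:R) * C o40 o42 o40 o43 + (1%:R / 2%:R) * C o40 o41 o41 o42)
  | 4 => (- (1%:R / 2%:R) * C o40 o42 o40 o42 - (1%:R / 2%:R) * C o40 o41 o40 o41)
  | 5 => (- (1%:R / 2%:R) * C o40 o42 o41 o43 + (1%:R / 2%:R) * C o40 o41 o42 o43)
  | 6 => (- (1%:R / 2%:R) * C o40 o42 o41 o42 + (1%:R / 2%:R) * C o40 o41 o40 o43)
  | 7 => (- (1%:R / 2%:R) * C o40 o42 o40 o43 - (1%:R / 2%:R) * C o40 o41 o41 o42)
  | 8 => (- (1%:R / 2%:R) * C o40 o42 o40 o42 + C o40 o41 o41 o43 + (1%:R / 2%:R) * C o40 o41 o40 o41)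
  | 9 => (- (1%:R / 2%:R) * C o40 o42 o41 o43 - (1%:R / 2%:R) * C o40 o41 o42 o43 - C o40 o41 o40 o42)
  | _ => 0
  end.

Lemma weyl_rels (R : realType) (C : tensor4 R) : is_weyl C ->
  C o40 o42 o42 o43 = (- C o40 o41 o41 o43) /\
  C o40 o43 o40 o43 = (- C o40 o42 o40 o42 - C o40 o41 o40 o41) /\
  C o40 o43 o41 o42 = (C o40 o42 o41 o43 - C o40 o41 o42 o43) /\
  C o40 o43 o41 o43 = (- C o40 o42 o41 o42) /\
  C o40 o43 o42 o43 = (C o40 o41 o41 o42) /\
  C o41 o42 o41 o42 = (C o40 o42 o40 o42 + C o40 o41 o40 o41) /\
  C o41 o42 o41 o43 = (C o40 o42 o40 o43) /\
  C o41 o42 o42 o43 = (- C o40 o41 o40 o43) /\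
  C o41 o43 o41 o43 = (- C o40 o42 o40 o42) /\
  C o41 o43 o42 o43 = (C o40 o41 o40 o42) /\
  C o42 o43 o42 o43 = (- C o40 o41 o40 o41).
Proof.
move=> [hA hB hP hY hT].
split.
  have := hT o40 o43; rewrite !big4 /Defs.eta /= => ?; have := hA o40 o40 o40 o43; have := hA o41 o40 o41 o43; have := hA o42 o40 o42 o43; have := hB o43 o40 o43 o43; lra.
split.
  have := hT o40 o40; rewrite !big4 /Defs.eta /= => ?; have := hA o40 o40 o40 o40; have := hA o41 o40 o41 o40; have := hA o42 o40 o42 o40; have := hA o43 o40 o43 o40; have := hB o40 o41 o41 o40; have := hB o40 o42 o42 o40; have := hB o40 o43 o43 o40; lra.
split.
  have := hY o40 o41 o42 o43; have := hB o40 o42 o43 o41; lra.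
split.
  have := hT o40 o41; rewrite !big4 /Defs.eta /= => ?; have := hA o40 o40 o40 o41; have := hA o42 o40 o42 o41; have := hA o43 o40 o43 o41; have := hB o40 o42 o42 o41; have := hB o40 o43 o43 o41; have := hB o41 o40 o41 o41; lra.
split.
  have := hT o40 o42; rewrite !big4 /Defs.eta /= => ?; have := hA o40 o40 o40 o42; have := hA o41 o40 o41 o42; have := hA o43 o40 o43 o42; have := hB o40 o43 o43 o42; have := hB o42 o40 o42 o42; lra.
split.
  have := hT o40 o40; rewrite !big4 /Defs.eta /= => ?; have := hT o41 o41; rewrite !big4 /Defs.eta /= => ?; have := hT o42 o42; rewrite !big4 /Defs.eta /= => ?; have := hT o43 o43; rewrite !big4 /Defs.eta /= => ?; have := hA o40 o40 o40 o40; have := hA o41 o40 o41 o40; have := hA o41 o41 o41 o41; have := hA o42 o40 o42 o40; have := hA o42 o41 o42 o41; have := hA o42 o42 o42 o42; have := hA o43 o40 o43 o40; have := hA o43 o41 o43 o41; have := hA o43 o42 o43 o42; have := hA o43 o43 o43 o43; have := hB o40 o41 o41 o40; have := hB o40 o42 o42 o40; have := hB o40 o43 o43 o40; have := hB o41 o42 o42 o41; have := hB o41 o43 o43 o41; have := hB o42 o43 o43 o42; lra.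
split.
  have := hT o42 o43; rewrite !big4 /Defs.eta /= => ?; have := hA o42 o42 o42 o43; have := hB o43 o42 o43 o43; lra.
split.
  have := hT o41 o43; rewrite !big4 /Defs.eta /= => ?; have := hA o41 o41 o41 o43; have := hA o42 o41 o42 o43; have := hB o43 o41 o43 o43; lra.
split.
  have := hT o40 o40; rewrite !big4 /Defs.eta /= => ?; have := hT o41 o41; rewrite !big4 /Defs.eta /= => ?; have := hT o42 o42; rewrite !big4 /Defs.eta /= => ?; have := hT o43 o43; rewrite !big4 /Defs.eta /= => ?; have := hA o40 o40 o40 o40; have := hA o41 o40 o41 o40; have := hA o41 o41 o41 o41; have := hA o42 o40 o42 o40; have := hA o42 o41 o42 o41; have := hA o42 o42 o42 o42; have := hA o43 o40 o43 o40; have := hA o43 o41 o43 o41; have := hA o43 o42 o43 o42; have := hA o43 o43 o43 o43; have := hB o40 o41 o41 o40; have := hB o40 o42 o42 o40; have := hB o40 o43 o43 o40; have := hB o41 o42 o42 o41; have := hB o41 o43 o43 o41; have := hB o42 o43 o43 o42; lra.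
split.
  have := hT o41 o42; rewrite !big4 /Defs.eta /= => ?; have := hA o41 o41 o41 o42; have := hA o43 o41 o43 o42; have := hB o41 o43 o43 o42; have := hB o42 o41 o42 o42; lra.
have := hT o40 o40; rewrite !big4 /Defs.eta /= => ?; have := hT o41 o41; rewrite !big4 /Defs.eta /= => ?; have := hT o42 o42; rewrite !big4 /Defs.eta /= => ?; have := hT o43 o43; rewrite !big4 /Defs.eta /= => ?; have := hA o40 o40 o40 o40; have := hA o41 o40 o41 o40; have := hA o41 o41 o41 o41; have := hA o42 o40 o42 o40; have := hA o42 o41 o42 o41; have := hA o42 o42 o42 o42; have := hA o43 o40 o43 o40; have := hA o43 o41 o43 o41; have := hA o43 o42 o43 o42; have := hA o43 o43 o43 o43; have := hB o40 o41 o41 o40; have := hB o40 o42 o42 o40; have := hB o40 o43 o43 o40; have := hB o41 o42 o42 o41; have := hB o41 o43 o43 o41; have := hB o42 o43 o43 o42; lra.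
Qed.

Lemma weyl_param (R : realType) (C : tensor4 R) : is_weyl C ->
  forall a b c d, C a b c d = W R (pC R C) a b c d.
Proof.
move=> hw a b c d.
case: (case4 a) => [->|[->|[->|->]]]; case: (case4 b) => [->|[->|[->|->]]];
case: (case4 c) => [->|[->|[->|->]]]; case: (case4 d) => [->|[->|[->|->]]];
cbv beta iota delta [W pC nat_of_ord].
- case: hw => hA hB hP _ _. have := hA o40 o40 o40 o40; lra.
- case: hw => hA hB hP _ _. have := hA o40 o40 o40 o41; lra.
- case: hw => hA hB hP _ _. have := hA o40 o40 o40 o42; lra.
- case: hw => hA hB hP _ _. have := hA o40 o40 o40 o43; lra.
- case: hw => hA hB hP _ _. have := hA o40 o40 o41 o40; lra.
- case: hw => hA hB hP _ _. have := hA o40 o40 o41 o41; lra.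
- case: hw => hA hB hP _ _. have := hA o40 o40 o41 o42; lra.
- case: hw => hA hB hP _ _. have := hA o40 o40 o41 o43; lra.
- case: hw => hA hB hP _ _. have := hA o40 o40 o42 o40; lra.
- case: hw => hA hB hP _ _. have := hA o40 o40 o42 o41; lra.
- case: hw => hA hB hP _ _. have := hA o40 o40 o42 o42; lra.
- case: hw => hA hB hP _ _. have := hA o40 o40 o42 o43; lra.
- case: hw => hA hB hP _ _. have := hA o40 o40 o43 o40; lra.
- case: hw => hA hB hP _ _. have := hA o40 o40 o43 o41; lra.
- case: hw => hA hB hP _ _. have := hA o40 o40 o43 o42; lra.
- case: hw => hA hB hP _ _. have := hA o40 o40 o43 o43; lra.
- case: hw => hA hB hP _ _. have := hB o40 o41 o40 o40; lra.
- case: hw => hA hB hP _ _.  lra.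
- case: hw => hA hB hP _ _.  lra.
- case: hw => hA hB hP _ _.  lra.
- case: hw => hA hB hP _ _. have := hB o40 o41 o41 o40; lra.
- case: hw => hA hB hP _ _. have := hB o40 o41 o41 o41; lra.
- case: hw => hA hB hP _ _.  lra.
- case: hw => hA hB hP _ _.  lra.
- case: hw => hA hB hP _ _. have := hB o40 o41 o42 o40; lra.
- case: hw => hA hB hP _ _. have := hB o40 o41 o42 o41; lra.
- case: hw => hA hB hP _ _. have := hB o40 o41 o42 o42; lra.
- case: hw => hA hB hP _ _.  lra.
- case: hw => hA hB hP _ _. have := hB o40 o41 o43 o40; lra.
- case: hw => hA hB hP _ _. have := hB o40 o41 o43 o41; lra.
- case: hw => hA hB hP _ _. have := hB o40 o41 o43 o42; lra.
- case: hw => hA hB hP _ _. have := hB o40 o41 o43 o43; lra.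
- case: hw => hA hB hP _ _. have := hB o40 o42 o40 o40; lra.
- case: hw => hA hB hP _ _. have := hP o40 o42 o40 o41; lra.
- case: hw => hA hB hP _ _.  lra.
- case: hw => hA hB hP _ _.  lra.
- case: hw => hA hB hP _ _. have := hB o40 o42 o41 o40; have := hP o40 o42 o40 o41; lra.
- case: hw => hA hB hP _ _. have := hB o40 o42 o41 o41; lra.
- case: hw => hA hB hP _ _.  lra.
- case: hw => hA hB hP _ _.  lra.
- case: hw => hA hB hP _ _. have := hB o40 o42 o42 o40; lra.
- case: hw => hA hB hP _ _. have := hB o40 o42 o42 o41; lra.
- case: hw => hA hB hP _ _. have := hB o40 o42 o42 o42; lra.
- have [rr [_ [_ [_ [_ [_ [_ [_ [_ [_ _]]]]]]]]]] := @weyl_rels _ _ hw; case: hw => hA hB hP _ _.  lra.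
- case: hw => hA hB hP _ _. have := hB o40 o42 o43 o40; lra.
- case: hw => hA hB hP _ _. have := hB o40 o42 o43 o41; lra.
- have [rr [_ [_ [_ [_ [_ [_ [_ [_ [_ _]]]]]]]]]] := @weyl_rels _ _ hw; case: hw => hA hB hP _ _. have := hB o40 o42 o43 o42; lra.
- case: hw => hA hB hP _ _. have := hB o40 o42 o43 o43; lra.
- case: hw => hA hB hP _ _. have := hB o40 o43 o40 o40; lra.
- case: hw => hA hB hP _ _. have := hP o40 o43 o40 o41; lra.
- case: hw => hA hB hP _ _. have := hP o40 o43 o40 o42; lra.
- have [_ [rr [_ [_ [_ [_ [_ [_ [_ [_ _]]]]]]]]]] := @weyl_rels _ _ hw; case: hw => hA hB hP _ _.  lra.
- case: hw => hA hB hP _ _. have := hB o40 o43 o41 o40; have := hP o40 o43 o40 o41; lra.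
- case: hw => hA hB hP _ _. have := hB o40 o43 o41 o41; lra.
- have [_ [_ [rr [_ [_ [_ [_ [_ [_ [_ _]]]]]]]]]] := @weyl_rels _ _ hw; case: hw => hA hB hP _ _.  lra.
- have [_ [_ [_ [rr [_ [_ [_ [_ [_ [_ _]]]]]]]]]] := @weyl_rels _ _ hw; case: hw => hA hB hP _ _.  lra.
- case: hw => hA hB hP _ _. have := hB o40 o43 o42 o40; have := hP o40 o43 o40 o42; lra.
- have [_ [_ [rr [_ [_ [_ [_ [_ [_ [_ _]]]]]]]]]] := @weyl_rels _ _ hw; case: hw => hA hB hP _ _. have := hB o40 o43 o42 o41; lra.
- case: hw => hA hB hP _ _. have := hB o40 o43 o42 o42; lra.
- have [_ [_ [_ [_ [rr [_ [_ [_ [_ [_ _]]]]]]]]]] := @weyl_rels _ _ hw; case: hw => hA hB hP _ _.  lra.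
- have [_ [rr [_ [_ [_ [_ [_ [_ [_ [_ _]]]]]]]]]] := @weyl_rels _ _ hw; case: hw => hA hB hP _ _. have := hB o40 o43 o43 o40; lra.
- have [_ [_ [_ [rr [_ [_ [_ [_ [_ [_ _]]]]]]]]]] := @weyl_rels _ _ hw; case: hw => hA hB hP _ _. have := hB o40 o43 o43 o41; lra.
- have [_ [_ [_ [_ [rr [_ [_ [_ [_ [_ _]]]]]]]]]] := @weyl_rels _ _ hw; case: hw => hA hB hP _ _. have := hB o40 o43 o43 o42; lra.
- case: hw => hA hB hP _ _. have := hB o40 o43 o43 o43; lra.
- case: hw => hA hB hP _ _. have := hB o41 o40 o40 o40; lra.
- case: hw => hA hB hP _ _. have := hA o41 o40 o40 o41; lra.
- case: hw => hA hB hP _ _. have := hA o41 o40 o40 o42; lra.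
- case: hw => hA hB hP _ _. have := hA o41 o40 o40 o43; lra.
- case: hw => hA hB hP _ _. have := hA o41 o40 o41 o40; have := hB o40 o41 o41 o40; lra.
- case: hw => hA hB hP _ _. have := hB o41 o40 o41 o41; lra.
- case: hw => hA hB hP _ _. have := hA o41 o40 o41 o42; lra.
- case: hw => hA hB hP _ _. have := hA o41 o40 o41 o43; lra.
- case: hw => hA hB hP _ _. have := hA o41 o40 o42 o40; have := hB o40 o41 o42 o40; lra.
- case: hw => hA hB hP _ _. have := hA o41 o40 o42 o41; have := hB o40 o41 o42 o41; lra.
- case: hw => hA hB hP _ _. have := hB o41 o40 o42 o42; lra.
- case: hw => hA hB hP _ _. have := hA o41 o40 o42 o43; lra.
- case: hw => hA hB hP _ _. have := hA o41 o40 o43 o40; have := hB o40 o41 o43 o40; lra.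
- case: hw => hA hB hP _ _. have := hA o41 o40 o43 o41; have := hB o40 o41 o43 o41; lra.
- case: hw => hA hB hP _ _. have := hA o41 o40 o43 o42; have := hB o40 o41 o43 o42; lra.
- case: hw => hA hB hP _ _. have := hB o41 o40 o43 o43; lra.
- case: hw => hA hB hP _ _. have := hA o41 o41 o40 o40; lra.
- case: hw => hA hB hP _ _. have := hA o41 o41 o40 o41; lra.
- case: hw => hA hB hP _ _. have := hA o41 o41 o40 o42; lra.
- case: hw => hA hB hP _ _. have := hA o41 o41 o40 o43; lra.
- case: hw => hA hB hP _ _. have := hA o41 o41 o41 o40; lra.
- case: hw => hA hB hP _ _. have := hA o41 o41 o41 o41; lra.
- case: hw => hA hB hP _ _. have := hA o41 o41 o41 o42; lra.
- case: hw => hA hB hP _ _. have := hA o41 o41 o41 o43; lra.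
- case: hw => hA hB hP _ _. have := hA o41 o41 o42 o40; lra.
- case: hw => hA hB hP _ _. have := hA o41 o41 o42 o41; lra.
- case: hw => hA hB hP _ _. have := hA o41 o41 o42 o42; lra.
- case: hw => hA hB hP _ _. have := hA o41 o41 o42 o43; lra.
- case: hw => hA hB hP _ _. have := hA o41 o41 o43 o40; lra.
- case: hw => hA hB hP _ _. have := hA o41 o41 o43 o41; lra.
- case: hw => hA hB hP _ _. have := hA o41 o41 o43 o42; lra.
- case: hw => hA hB hP _ _. have := hA o41 o41 o43 o43; lra.
- case: hw => hA hB hP _ _. have := hB o41 o42 o40 o40; lra.
- case: hw => hA hB hP _ _. have := hP o41 o42 o40 o41; lra.
- case: hw => hA hB hP _ _. have := hP o41 o42 o40 o42; lra.
- have [_ [_ [rr [_ [_ [_ [_ [_ [_ [_ _]]]]]]]]]] := @weyl_rels _ _ hw; case: hw => hA hB hP _ _. have := hP o41 o42 o40 o43; lra.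
- case: hw => hA hB hP _ _. have := hB o41 o42 o41 o40; have := hP o41 o42 o40 o41; lra.
- case: hw => hA hB hP _ _. have := hB o41 o42 o41 o41; lra.
- have [_ [_ [_ [_ [_ [rr [_ [_ [_ [_ _]]]]]]]]]] := @weyl_rels _ _ hw; case: hw => hA hB hP _ _.  lra.
- have [_ [_ [_ [_ [_ [_ [rr [_ [_ [_ _]]]]]]]]]] := @weyl_rels _ _ hw; case: hw => hA hB hP _ _.  lra.
- case: hw => hA hB hP _ _. have := hB o41 o42 o42 o40; have := hP o41 o42 o40 o42; lra.
- have [_ [_ [_ [_ [_ [rr [_ [_ [_ [_ _]]]]]]]]]] := @weyl_rels _ _ hw; case: hw => hA hB hP _ _. have := hB o41 o42 o42 o41; lra.
- case: hw => hA hB hP _ _. have := hB o41 o42 o42 o42; lra.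
- have [_ [_ [_ [_ [_ [_ [_ [rr [_ [_ _]]]]]]]]]] := @weyl_rels _ _ hw; case: hw => hA hB hP _ _.  lra.
- have [_ [_ [rr [_ [_ [_ [_ [_ [_ [_ _]]]]]]]]]] := @weyl_rels _ _ hw; case: hw => hA hB hP _ _. have := hB o41 o42 o43 o40; have := hP o41 o42 o40 o43; lra.
- have [_ [_ [_ [_ [_ [_ [rr [_ [_ [_ _]]]]]]]]]] := @weyl_rels _ _ hw; case: hw => hA hB hP _ _. have := hB o41 o42 o43 o41; lra.
- have [_ [_ [_ [_ [_ [_ [_ [rr [_ [_ _]]]]]]]]]] := @weyl_rels _ _ hw; case: hw => hA hB hP _ _. have := hB o41 o42 o43 o42; lra.
- case: hw => hA hB hP _ _. have := hB o41 o42 o43 o43; lra.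
- case: hw => hA hB hP _ _. have := hB o41 o43 o40 o40; lra.
- case: hw => hA hB hP _ _. have := hP o41 o43 o40 o41; lra.
- case: hw => hA hB hP _ _. have := hP o41 o43 o40 o42; lra.
- have [_ [_ [_ [rr [_ [_ [_ [_ [_ [_ _]]]]]]]]]] := @weyl_rels _ _ hw; case: hw => hA hB hP _ _. have := hP o41 o43 o40 o43; lra.
- case: hw => hA hB hP _ _. have := hB o41 o43 o41 o40; have := hP o41 o43 o40 o41; lra.
- case: hw => hA hB hP _ _. have := hB o41 o43 o41 o41; lra.
- have [_ [_ [_ [_ [_ [_ [rr [_ [_ [_ _]]]]]]]]]] := @weyl_rels _ _ hw; case: hw => hA hB hP _ _. have := hP o41 o43 o41 o42; lra.
- have [_ [_ [_ [_ [_ [_ [_ [_ [rr [_ _]]]]]]]]]] := @weyl_rels _ _ hw; case: hw => hA hB hP _ _.  lra.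
- case: hw => hA hB hP _ _. have := hB o41 o43 o42 o40; have := hP o41 o43 o40 o42; lra.
- have [_ [_ [_ [_ [_ [_ [rr [_ [_ [_ _]]]]]]]]]] := @weyl_rels _ _ hw; case: hw => hA hB hP _ _. have := hB o41 o43 o42 o41; have := hP o41 o43 o41 o42; lra.
- case: hw => hA hB hP _ _. have := hB o41 o43 o42 o42; lra.
- have [_ [_ [_ [_ [_ [_ [_ [_ [_ [rr _]]]]]]]]]] := @weyl_rels _ _ hw; case: hw => hA hB hP _ _.  lra.
- have [_ [_ [_ [rr [_ [_ [_ [_ [_ [_ _]]]]]]]]]] := @weyl_rels _ _ hw; case: hw => hA hB hP _ _. have := hB o41 o43 o43 o40; have := hP o41 o43 o40 o43; lra.
- have [_ [_ [_ [_ [_ [_ [_ [_ [rr [_ _]]]]]]]]]] := @weyl_rels _ _ hw; case: hw => hA hB hP _ _. have := hB o41 o43 o43 o41; lra.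
- have [_ [_ [_ [_ [_ [_ [_ [_ [_ [rr _]]]]]]]]]] := @weyl_rels _ _ hw; case: hw => hA hB hP _ _. have := hB o41 o43 o43 o42; lra.
- case: hw => hA hB hP _ _. have := hB o41 o43 o43 o43; lra.
- case: hw => hA hB hP _ _. have := hB o42 o40 o40 o40; lra.
- case: hw => hA hB hP _ _. have := hA o42 o40 o40 o41; have := hP o40 o42 o40 o41; lra.
- case: hw => hA hB hP _ _. have := hA o42 o40 o40 o42; lra.
- case: hw => hA hB hP _ _. have := hA o42 o40 o40 o43; lra.
- case: hw => hA hB hP _ _. have := hA o42 o40 o41 o40; have := hB o40 o42 o41 o40; have := hP o40 o42 o40 o41; lra.
- case: hw => hA hB hP _ _. have := hB o42 o40 o41 o41; lra.
- case: hw => hA hB hP _ _. have := hA o42 o40 o41 o42; lra.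
- case: hw => hA hB hP _ _. have := hA o42 o40 o41 o43; lra.
- case: hw => hA hB hP _ _. have := hA o42 o40 o42 o40; have := hB o40 o42 o42 o40; lra.
- case: hw => hA hB hP _ _. have := hA o42 o40 o42 o41; have := hB o40 o42 o42 o41; lra.
- case: hw => hA hB hP _ _. have := hB o42 o40 o42 o42; lra.
- have [rr [_ [_ [_ [_ [_ [_ [_ [_ [_ _]]]]]]]]]] := @weyl_rels _ _ hw; case: hw => hA hB hP _ _. have := hA o42 o40 o42 o43; lra.
- case: hw => hA hB hP _ _. have := hA o42 o40 o43 o40; have := hB o40 o42 o43 o40; lra.
- case: hw => hA hB hP _ _. have := hA o42 o40 o43 o41; have := hB o40 o42 o43 o41; lra.
- have [rr [_ [_ [_ [_ [_ [_ [_ [_ [_ _]]]]]]]]]] := @weyl_rels _ _ hw; case: hw => hA hB hP _ _. have := hA o42 o40 o43 o42; have := hB o40 o42 o43 o42; lra.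
- case: hw => hA hB hP _ _. have := hB o42 o40 o43 o43; lra.
- case: hw => hA hB hP _ _. have := hB o42 o41 o40 o40; lra.
- case: hw => hA hB hP _ _. have := hA o42 o41 o40 o41; have := hP o41 o42 o40 o41; lra.
- case: hw => hA hB hP _ _. have := hA o42 o41 o40 o42; have := hP o41 o42 o40 o42; lra.
- have [_ [_ [rr [_ [_ [_ [_ [_ [_ [_ _]]]]]]]]]] := @weyl_rels _ _ hw; case: hw => hA hB hP _ _. have := hA o42 o41 o40 o43; have := hP o41 o42 o40 o43; lra.
- case: hw => hA hB hP _ _. have := hA o42 o41 o41 o40; have := hB o41 o42 o41 o40; have := hP o41 o42 o40 o41; lra.
- case: hw => hA hB hP _ _. have := hB o42 o41 o41 o41; lra.
- have [_ [_ [_ [_ [_ [rr [_ [_ [_ [_ _]]]]]]]]]] := @weyl_rels _ _ hw; case: hw => hA hB hP _ _. have := hA o42 o41 o41 o42; lra.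
- have [_ [_ [_ [_ [_ [_ [rr [_ [_ [_ _]]]]]]]]]] := @weyl_rels _ _ hw; case: hw => hA hB hP _ _. have := hA o42 o41 o41 o43; lra.
- case: hw => hA hB hP _ _. have := hA o42 o41 o42 o40; have := hB o41 o42 o42 o40; have := hP o41 o42 o40 o42; lra.
- have [_ [_ [_ [_ [_ [rr [_ [_ [_ [_ _]]]]]]]]]] := @weyl_rels _ _ hw; case: hw => hA hB hP _ _. have := hA o42 o41 o42 o41; have := hB o41 o42 o42 o41; lra.
- case: hw => hA hB hP _ _. have := hB o42 o41 o42 o42; lra.
- have [_ [_ [_ [_ [_ [_ [_ [rr [_ [_ _]]]]]]]]]] := @weyl_rels _ _ hw; case: hw => hA hB hP _ _. have := hA o42 o41 o42 o43; lra.
- have [_ [_ [rr [_ [_ [_ [_ [_ [_ [_ _]]]]]]]]]] := @weyl_rels _ _ hw; case: hw => hA hB hP _ _. have := hA o42 o41 o43 o40; have := hB o41 o42 o43 o40; have := hP o41 o42 o40 o43; lra.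
- have [_ [_ [_ [_ [_ [_ [rr [_ [_ [_ _]]]]]]]]]] := @weyl_rels _ _ hw; case: hw => hA hB hP _ _. have := hA o42 o41 o43 o41; have := hB o41 o42 o43 o41; lra.
- have [_ [_ [_ [_ [_ [_ [_ [rr [_ [_ _]]]]]]]]]] := @weyl_rels _ _ hw; case: hw => hA hB hP _ _. have := hA o42 o41 o43 o42; have := hB o41 o42 o43 o42; lra.
- case: hw => hA hB hP _ _. have := hB o42 o41 o43 o43; lra.
- case: hw => hA hB hP _ _. have := hA o42 o42 o40 o40; lra.
- case: hw => hA hB hP _ _. have := hA o42 o42 o40 o41; lra.
- case: hw => hA hB hP _ _. have := hA o42 o42 o40 o42; lra.
- case: hw => hA hB hP _ _. have := hA o42 o42 o40 o43; lra.
- case: hw => hA hB hP _ _. have := hA o42 o42 o41 o40; lra.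
- case: hw => hA hB hP _ _. have := hA o42 o42 o41 o41; lra.
- case: hw => hA hB hP _ _. have := hA o42 o42 o41 o42; lra.
- case: hw => hA hB hP _ _. have := hA o42 o42 o41 o43; lra.
- case: hw => hA hB hP _ _. have := hA o42 o42 o42 o40; lra.
- case: hw => hA hB hP _ _. have := hA o42 o42 o42 o41; lra.
- case: hw => hA hB hP _ _. have := hA o42 o42 o42 o42; lra.
- case: hw => hA hB hP _ _. have := hA o42 o42 o42 o43; lra.
- case: hw => hA hB hP _ _. have := hA o42 o42 o43 o40; lra.
- case: hw => hA hB hP _ _. have := hA o42 o42 o43 o41; lra.
- case: hw => hA hB hP _ _. have := hA o42 o42 o43 o42; lra.
- case: hw => hA hB hP _ _. have := hA o42 o42 o43 o43; lra.
- case: hw => hA hB hP _ _. have := hB o42 o43 o40 o40; lra.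
- case: hw => hA hB hP _ _. have := hP o42 o43 o40 o41; lra.
- have [rr [_ [_ [_ [_ [_ [_ [_ [_ [_ _]]]]]]]]]] := @weyl_rels _ _ hw; case: hw => hA hB hP _ _. have := hP o42 o43 o40 o42; lra.
- have [_ [_ [_ [_ [rr [_ [_ [_ [_ [_ _]]]]]]]]]] := @weyl_rels _ _ hw; case: hw => hA hB hP _ _. have := hP o42 o43 o40 o43; lra.
- case: hw => hA hB hP _ _. have := hB o42 o43 o41 o40; have := hP o42 o43 o40 o41; lra.
- case: hw => hA hB hP _ _. have := hB o42 o43 o41 o41; lra.
- have [_ [_ [_ [_ [_ [_ [_ [rr [_ [_ _]]]]]]]]]] := @weyl_rels _ _ hw; case: hw => hA hB hP _ _. have := hP o42 o43 o41 o42; lra.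
- have [_ [_ [_ [_ [_ [_ [_ [_ [_ [rr _]]]]]]]]]] := @weyl_rels _ _ hw; case: hw => hA hB hP _ _. have := hP o42 o43 o41 o43; lra.
- have [rr [_ [_ [_ [_ [_ [_ [_ [_ [_ _]]]]]]]]]] := @weyl_rels _ _ hw; case: hw => hA hB hP _ _. have := hB o42 o43 o42 o40; have := hP o42 o43 o40 o42; lra.
- have [_ [_ [_ [_ [_ [_ [_ [rr [_ [_ _]]]]]]]]]] := @weyl_rels _ _ hw; case: hw => hA hB hP _ _. have := hB o42 o43 o42 o41; have := hP o42 o43 o41 o42; lra.
- case: hw => hA hB hP _ _. have := hB o42 o43 o42 o42; lra.
- have [_ [_ [_ [_ [_ [_ [_ [_ [_ [_ rr]]]]]]]]]] := @weyl_rels _ _ hw; case: hw => hA hB hP _ _.  lra.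
- have [_ [_ [_ [_ [rr [_ [_ [_ [_ [_ _]]]]]]]]]] := @weyl_rels _ _ hw; case: hw => hA hB hP _ _. have := hB o42 o43 o43 o40; have := hP o42 o43 o40 o43; lra.
- have [_ [_ [_ [_ [_ [_ [_ [_ [_ [rr _]]]]]]]]]] := @weyl_rels _ _ hw; case: hw => hA hB hP _ _. have := hB o42 o43 o43 o41; have := hP o42 o43 o41 o43; lra.
- have [_ [_ [_ [_ [_ [_ [_ [_ [_ [_ rr]]]]]]]]]] := @weyl_rels _ _ hw; case: hw => hA hB hP _ _. have := hB o42 o43 o43 o42; lra.
- case: hw => hA hB hP _ _. have := hB o42 o43 o43 o43; lra.
- case: hw => hA hB hP _ _. have := hB o43 o40 o40 o40; lra.
- case: hw => hA hB hP _ _. have := hA o43 o40 o40 o41; have := hP o40 o43 o40 o41; lra.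
- case: hw => hA hB hP _ _. have := hA o43 o40 o40 o42; have := hP o40 o43 o40 o42; lra.
- have [_ [rr [_ [_ [_ [_ [_ [_ [_ [_ _]]]]]]]]]] := @weyl_rels _ _ hw; case: hw => hA hB hP _ _. have := hA o43 o40 o40 o43; lra.
- case: hw => hA hB hP _ _. have := hA o43 o40 o41 o40; have := hB o40 o43 o41 o40; have := hP o40 o43 o40 o41; lra.
- case: hw => hA hB hP _ _. have := hB o43 o40 o41 o41; lra.
- have [_ [_ [rr [_ [_ [_ [_ [_ [_ [_ _]]]]]]]]]] := @weyl_rels _ _ hw; case: hw => hA hB hP _ _. have := hA o43 o40 o41 o42; lra.
- have [_ [_ [_ [rr [_ [_ [_ [_ [_ [_ _]]]]]]]]]] := @weyl_rels _ _ hw; case: hw => hA hB hP _ _. have := hA o43 o40 o41 o43; lra.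
- case: hw => hA hB hP _ _. have := hA o43 o40 o42 o40; have := hB o40 o43 o42 o40; have := hP o40 o43 o40 o42; lra.
- have [_ [_ [rr [_ [_ [_ [_ [_ [_ [_ _]]]]]]]]]] := @weyl_rels _ _ hw; case: hw => hA hB hP _ _. have := hA o43 o40 o42 o41; have := hB o40 o43 o42 o41; lra.
- case: hw => hA hB hP _ _. have := hB o43 o40 o42 o42; lra.
- have [_ [_ [_ [_ [rr [_ [_ [_ [_ [_ _]]]]]]]]]] := @weyl_rels _ _ hw; case: hw => hA hB hP _ _. have := hA o43 o40 o42 o43; lra.
- have [_ [rr [_ [_ [_ [_ [_ [_ [_ [_ _]]]]]]]]]] := @weyl_rels _ _ hw; case: hw => hA hB hP _ _. have := hA o43 o40 o43 o40; have := hB o40 o43 o43 o40; lra.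
- have [_ [_ [_ [rr [_ [_ [_ [_ [_ [_ _]]]]]]]]]] := @weyl_rels _ _ hw; case: hw => hA hB hP _ _. have := hA o43 o40 o43 o41; have := hB o40 o43 o43 o41; lra.
- have [_ [_ [_ [_ [rr [_ [_ [_ [_ [_ _]]]]]]]]]] := @weyl_rels _ _ hw; case: hw => hA hB hP _ _. have := hA o43 o40 o43 o42; have := hB o40 o43 o43 o42; lra.
- case: hw => hA hB hP _ _. have := hB o43 o40 o43 o43; lra.
- case: hw => hA hB hP _ _. have := hB o43 o41 o40 o40; lra.
- case: hw => hA hB hP _ _. have := hA o43 o41 o40 o41; have := hP o41 o43 o40 o41; lra.
- case: hw => hA hB hP _ _. have := hA o43 o41 o40 o42; have := hP o41 o43 o40 o42; lra.
- have [_ [_ [_ [rr [_ [_ [_ [_ [_ [_ _]]]]]]]]]] := @weyl_rels _ _ hw; case: hw => hA hB hP _ _. have := hA o43 o41 o40 o43; have := hP o41 o43 o40 o43; lra.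
- case: hw => hA hB hP _ _. have := hA o43 o41 o41 o40; have := hB o41 o43 o41 o40; have := hP o41 o43 o40 o41; lra.
- case: hw => hA hB hP _ _. have := hB o43 o41 o41 o41; lra.
- have [_ [_ [_ [_ [_ [_ [rr [_ [_ [_ _]]]]]]]]]] := @weyl_rels _ _ hw; case: hw => hA hB hP _ _. have := hA o43 o41 o41 o42; have := hP o41 o43 o41 o42; lra.
- have [_ [_ [_ [_ [_ [_ [_ [_ [rr [_ _]]]]]]]]]] := @weyl_rels _ _ hw; case: hw => hA hB hP _ _. have := hA o43 o41 o41 o43; lra.
- case: hw => hA hB hP _ _. have := hA o43 o41 o42 o40; have := hB o41 o43 o42 o40; have := hP o41 o43 o40 o42; lra.
- have [_ [_ [_ [_ [_ [_ [rr [_ [_ [_ _]]]]]]]]]] := @weyl_rels _ _ hw; case: hw => hA hB hP _ _. have := hA o43 o41 o42 o41; have := hB o41 o43 o42 o41; have := hP o41 o43 o41 o42; lra.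
- case: hw => hA hB hP _ _. have := hB o43 o41 o42 o42; lra.
- have [_ [_ [_ [_ [_ [_ [_ [_ [_ [rr _]]]]]]]]]] := @weyl_rels _ _ hw; case: hw => hA hB hP _ _. have := hA o43 o41 o42 o43; lra.
- have [_ [_ [_ [rr [_ [_ [_ [_ [_ [_ _]]]]]]]]]] := @weyl_rels _ _ hw; case: hw => hA hB hP _ _. have := hA o43 o41 o43 o40; have := hB o41 o43 o43 o40; have := hP o41 o43 o40 o43; lra.
- have [_ [_ [_ [_ [_ [_ [_ [_ [rr [_ _]]]]]]]]]] := @weyl_rels _ _ hw; case: hw => hA hB hP _ _. have := hA o43 o41 o43 o41; have := hB o41 o43 o43 o41; lra.
- have [_ [_ [_ [_ [_ [_ [_ [_ [_ [rr _]]]]]]]]]] := @weyl_rels _ _ hw; case: hw => hA hB hP _ _. have := hA o43 o41 o43 o42; have := hB o41 o43 o43 o42; lra.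
- case: hw => hA hB hP _ _. have := hB o43 o41 o43 o43; lra.
- case: hw => hA hB hP _ _. have := hB o43 o42 o40 o40; lra.
- case: hw => hA hB hP _ _. have := hA o43 o42 o40 o41; have := hP o42 o43 o40 o41; lra.
- have [rr [_ [_ [_ [_ [_ [_ [_ [_ [_ _]]]]]]]]]] := @weyl_rels _ _ hw; case: hw => hA hB hP _ _. have := hA o43 o42 o40 o42; have := hP o42 o43 o40 o42; lra.
- have [_ [_ [_ [_ [rr [_ [_ [_ [_ [_ _]]]]]]]]]] := @weyl_rels _ _ hw; case: hw => hA hB hP _ _. have := hA o43 o42 o40 o43; have := hP o42 o43 o40 o43; lra.
- case: hw => hA hB hP _ _. have := hA o43 o42 o41 o40; have := hB o42 o43 o41 o40; have := hP o42 o43 o40 o41; lra.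
- case: hw => hA hB hP _ _. have := hB o43 o42 o41 o41; lra.
- have [_ [_ [_ [_ [_ [_ [_ [rr [_ [_ _]]]]]]]]]] := @weyl_rels _ _ hw; case: hw => hA hB hP _ _. have := hA o43 o42 o41 o42; have := hP o42 o43 o41 o42; lra.
- have [_ [_ [_ [_ [_ [_ [_ [_ [_ [rr _]]]]]]]]]] := @weyl_rels _ _ hw; case: hw => hA hB hP _ _. have := hA o43 o42 o41 o43; have := hP o42 o43 o41 o43; lra.
- have [rr [_ [_ [_ [_ [_ [_ [_ [_ [_ _]]]]]]]]]] := @weyl_rels _ _ hw; case: hw => hA hB hP _ _. have := hA o43 o42 o42 o40; have := hB o42 o43 o42 o40; have := hP o42 o43 o40 o42; lra.
- have [_ [_ [_ [_ [_ [_ [_ [rr [_ [_ _]]]]]]]]]] := @weyl_rels _ _ hw; case: hw => hA hB hP _ _. have := hA o43 o42 o42 o41; have := hB o42 o43 o42 o41; have := hP o42 o43 o41 o42; lra.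
- case: hw => hA hB hP _ _. have := hB o43 o42 o42 o42; lra.
- have [_ [_ [_ [_ [_ [_ [_ [_ [_ [_ rr]]]]]]]]]] := @weyl_rels _ _ hw; case: hw => hA hB hP _ _. have := hA o43 o42 o42 o43; lra.
- have [_ [_ [_ [_ [rr [_ [_ [_ [_ [_ _]]]]]]]]]] := @weyl_rels _ _ hw; case: hw => hA hB hP _ _. have := hA o43 o42 o43 o40; have := hB o42 o43 o43 o40; have := hP o42 o43 o40 o43; lra.
- have [_ [_ [_ [_ [_ [_ [_ [_ [_ [rr _]]]]]]]]]] := @weyl_rels _ _ hw; case: hw => hA hB hP _ _. have := hA o43 o42 o43 o41; have := hB o42 o43 o43 o41; have := hP o42 o43 o41 o43; lra.
- have [_ [_ [_ [_ [_ [_ [_ [_ [_ [_ rr]]]]]]]]]] := @weyl_rels _ _ hw; case: hw => hA hB hP _ _. have := hA o43 o42 o43 o42; have := hB o42 o43 o43 o42; lra.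
- case: hw => hA hB hP _ _. have := hB o43 o42 o43 o43; lra.
- case: hw => hA hB hP _ _. have := hA o43 o43 o40 o40; lra.
- case: hw => hA hB hP _ _. have := hA o43 o43 o40 o41; lra.
- case: hw => hA hB hP _ _. have := hA o43 o43 o40 o42; lra.
- case: hw => hA hB hP _ _. have := hA o43 o43 o40 o43; lra.
- case: hw => hA hB hP _ _. have := hA o43 o43 o41 o40; lra.
- case: hw => hA hB hP _ _. have := hA o43 o43 o41 o41; lra.
- case: hw => hA hB hP _ _. have := hA o43 o43 o41 o42; lra.
- case: hw => hA hB hP _ _. have := hA o43 o43 o41 o43; lra.
- case: hw => hA hB hP _ _. have := hA o43 o43 o42 o40; lra.
- case: hw => hA hB hP _ _. have := hA o43 o43 o42 o41; lra.
- case: hw => hA hB hP _ _. have := hA o43 o43 o42 o42; lra.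
- case: hw => hA hB hP _ _. have := hA o43 o43 o42 o43; lra.
- case: hw => hA hB hP _ _. have := hA o43 o43 o43 o40; lra.
- case: hw => hA hB hP _ _. have := hA o43 o43 o43 o41; lra.
- case: hw => hA hB hP _ _. have := hA o43 o43 o43 o42; lra.
- case: hw => hA hB hP _ _. have := hA o43 o43 o43 o43; lra.
Qed.

Lemma hdual_red (R : realType) (C : tensor4 R) a b c d :
  hdual C a b c d = 2^-1 * \sum_(g < 4) \sum_(h < 4)
     levi R a b g h * Defs.eta R g g * Defs.eta R h h * C g h c d.
Proof.
rewrite /hdual; congr (_ * _).
under eq_bigr => e _ do rewrite exchange_big.
under eq_bigr => e _ do under eq_bigr => g _ do rewrite exchange_big.
rewrite exchange_big.
under eq_bigr => g _ do rewrite exchange_big.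
apply: eq_bigr => g _; apply: eq_bigr => h _.
rewrite !big4.
by case: (case4 g) => [->|[->|[->|->]]]; case: (case4 h) => [->|[->|[->|->]]]; rewrite /Defs.eta /=; ring.
Qed.

Definition dp (R : realType) (p : nat -> R) (k : nat) : R :=
  if odd k then p k.-1 else - p k.+1.

Lemma hdual_W (R : realType) (p : nat -> R) a b c d :
  hdual (W R p) a b c d = W R (dp R p) a b c d.
Proof.
rewrite hdual_red !big4 !levi_tab.
case: (case4 a) => [->|[->|[->|->]]]; case: (case4 b) => [->|[->|[->|->]]];
case: (case4 c) => [->|[->|[->|->]]]; case: (case4 d) => [->|[->|[->|->]]];
cbv beta iota delta [W lv dp nat_of_ord odd]; rewrite /Defs.eta /=.
all: lra.
Qed.

Lemma sw14 (V : nmodType) (m n : nat) (K : 'I_m -> 'I_n -> 'I_n -> 'I_n -> 'I_n -> V) :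
  \sum_(i < m) \sum_(j1 < n) \sum_(j2 < n) \sum_(j3 < n) \sum_(j4 < n) K i j1 j2 j3 j4 =
  \sum_(j1 < n) \sum_(j2 < n) \sum_(j3 < n) \sum_(j4 < n) \sum_(i < m) K i j1 j2 j3 j4.
Proof.
rewrite exchange_big; apply: eq_bigr => j1 _; rewrite exchange_big; apply: eq_bigr => j2 _.
rewrite exchange_big; apply: eq_bigr => j3 _; by rewrite exchange_big.
Qed.

Lemma swap44 (V : nmodType) (X : 'I_2 -> 'I_2 -> 'I_2 -> 'I_2 -> 'I_4 -> 'I_4 -> 'I_4 -> 'I_4 -> V) :
  \sum_(A1 < 2) \sum_(B1 < 2) \sum_(C1 < 2) \sum_(D1 < 2) \sum_(a < 4) \sum_(b < 4) \sum_(c < 4) \sum_(d < 4)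
    X A1 B1 C1 D1 a b c d =
  \sum_(a < 4) \sum_(b < 4) \sum_(c < 4) \sum_(d < 4) \sum_(A1 < 2) \sum_(B1 < 2) \sum_(C1 < 2) \sum_(D1 < 2)
    X A1 B1 C1 D1 a b c d.
Proof.
under eq_bigr => A1 _ do under eq_bigr => B1 _ do under eq_bigr => C1 _ do rewrite sw14.
under eq_bigr => A1 _ do under eq_bigr => B1 _ do rewrite sw14.
under eq_bigr => A1 _ do rewrite sw14.
by rewrite sw14.
Qed.

Definition sq (R : realType) : R := (Num.sqrt 2)^-1.
Definition Sx (R : realType) (a b : 'I_4) (A B : 'I_2) : R[i] :=
  \sum_(A1 < 2) \sum_(B1 < 2) sigma R a A A1 * sigma R b B B1 * epsS R A1 B1.
Definition Sh (R : realType) (a b : 'I_4) (A B : 'I_2) : R[i] :=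
  match nat_of_ord a, nat_of_ord b, nat_of_ord A, nat_of_ord B with
  | 0,0,0,1 => Complex 1 0
  | 0,0,1,0 => Complex (-1) 0
  | 0,1,0,0 => Complex 1 0
  | 0,1,1,1 => Complex (-1) 0
  | 0,2,0,0 => Complex 0 1
  | 0,2,1,1 => Complex 0 1
  | 0,3,0,1 => Complex (-1) 0
  | 0,3,1,0 => Complex (-1) 0
  | 1,0,0,0 => Complex (-1) 0
  | 1,0,1,1 => Complex 1 0
  | 1,1,0,1 => Complex (-1) 0
  | 1,1,1,0 => Complex 1 0
  | 1,2,0,1 => Complex 0 1
  | 1,2,1,0 => Complex 0 1
  | 1,3,0,0 => Complex (-1) 0
  | 1,3,1,1 => Complex (-1) 0
  | 2,0,0,0 => Complex 0 (-1)
  | 2,0,1,1 => Complex 0 (-1)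
  | 2,1,0,1 => Complex 0 (-1)
  | 2,1,1,0 => Complex 0 (-1)
  | 2,2,0,1 => Complex (-1) 0
  | 2,2,1,0 => Complex 1 0
  | 2,3,0,0 => Complex 0 (-1)
  | 2,3,1,1 => Complex 0 1
  | 3,0,0,1 => Complex 1 0
  | 3,0,1,0 => Complex 1 0
  | 3,1,0,0 => Complex 1 0
  | 3,1,1,1 => Complex 1 0
  | 3,2,0,0 => Complex 0 1
  | 3,2,1,1 => Complex 0 (-1)
  | 3,3,0,1 => Complex (-1) 0
  | 3,3,1,0 => Complex 1 0
  | _,_,_,_ => 0
  end.

Lemma Sx_tab (R : realType) a b A B : Sx R a b A B = cr (sq R * sq R) * Sh R a b A B.
Proof.
rewrite /Sx !big2 /sigma /epsS /sq.
case: (case4 a) => [->|[->|[->|->]]]; case: (case4 b) => [->|[->|[->|->]]];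
case: (case2 A) => ->; case: (case2 B) => ->; cbv beta iota delta [Sh nat_of_ord];
apply/eqP; rewrite eq_complex /=; apply/andP; split; apply/eqP; ring.
Qed.

Lemma ws_red (R : realType) (C : tensor4 R) A B C' D :
  weyl_spinor C A B C' D = (cr 4)^-1 * \sum_(a < 4) \sum_(b < 4) \sum_(c < 4) \sum_(d < 4)
     cr (C a b c d) * Sx R a b A B * Sx R c d C' D.
Proof.
rewrite /weyl_spinor; congr (_ * _).
rewrite swap44.
apply: eq_bigr => a _; apply: eq_bigr => b _; apply: eq_bigr => c _; apply: eq_bigr => d _.
rewrite /Sx !big2; ring.
Qed.

Lemma sq2 (R : realType) : sq R * sq R = 2^-1.
Proof. by rewrite /sq -invfM -expr2 sqr_sqrtr // ler0n. Qed.

Lemma crV (R : realType) (x : R) : (cr x)^-1 = cr x^-1.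
Proof.
rewrite /cr; apply/eqP; rewrite eq_complex /=; apply/andP; split; apply/eqP.
  have [->|x0] := eqVneq x 0; first by rewrite !expr0n /= !addr0 invr0 mul0r.
  by field.
by rewrite mul0r oppr0.
Qed.

Lemma crM (R : realType) (x y : R) : cr (x * y) = cr x * cr y.
Proof. by rewrite /cr; apply/eqP; rewrite eq_complex /= !mulr0 !mul0r subr0 addr0 !eqxx. Qed.

Lemma Re_sum (R : realType) n (F : 'I_n -> R[i]) : complex.Re (\sum_(i < n) F i) = \sum_(i < n) complex.Re (F i).
Proof. by apply: (big_morph (@complex.Re R)) => // x y; case: x; case: y. Qed.
Lemma Im_sum (R : realType) n (F : 'I_n -> R[i]) : complex.Im (\sum_(i < n) F i) = \sum_(i < n) complex.Im (F i).
Proof. by apply: (big_morph (@complex.Im R)) => // x y; case: x; case: y. Qed.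
Lemma Re_crM (R : realType) (x : R) (z : R[i]) : complex.Re (cr x * z) = x * complex.Re z.
Proof. by case: z => a b /=; rewrite mul0r subr0. Qed.
Lemma Im_crM (R : realType) (x : R) (z : R[i]) : complex.Im (cr x * z) = x * complex.Im z.
Proof. by case: z => a b /=; rewrite mul0r addr0. Qed.

Lemma sum4_distr (V : pzRingType) (k : V) (F : 'I_4 -> 'I_4 -> 'I_4 -> 'I_4 -> V) :
  \sum_(a < 4) \sum_(b < 4) \sum_(c < 4) \sum_(d < 4) (k * F a b c d) =
  k * \sum_(a < 4) \sum_(b < 4) \sum_(c < 4) \sum_(d < 4) F a b c d.
Proof.
rewrite big_distrr; apply: eq_bigr => a _; rewrite big_distrr; apply: eq_bigr => b _.
rewrite big_distrr; apply: eq_bigr => c _; by rewrite big_distrr.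
Qed.

Lemma ws_red2 (R : realType) (C : tensor4 R) A B C' D :
  weyl_spinor C A B C' D = cr (16^-1) * \sum_(a < 4) \sum_(b < 4) \sum_(c < 4) \sum_(d < 4)
     cr (C a b c d) * (Sh R a b A B * Sh R c d C' D).
Proof.
rewrite ws_red.
have e : forall a b c d, cr (C a b c d) * Sx R a b A B * Sx R c d C' D =
   cr (4^-1) * (cr (C a b c d) * (Sh R a b A B * Sh R c d C' D)).
  move=> a b c d; rewrite !Sx_tab sq2.
  have -> : cr (4^-1 : R) = cr (2^-1) * cr (2^-1) by rewrite -crM -invfM; congr (cr _^-1); ring.
  ring.
under eq_bigr => a _ do under eq_bigr => b _ do under eq_bigr => c _ do under eq_bigr => d _ do rewrite e.
rewrite sum4_distr crV mulrA -crM; congr (cr _ * _); rewrite -invfM; congr (_^-1); ring.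
Qed.

Definition psiC (R : realType) (p : nat -> R) (k : nat) : R[i] :=
  Complex (p k.*2) (p k.*2.+1).

Ltac reim_sum tac :=
  rewrite tac;
  under eq_bigr => a _ do rewrite tac; under eq_bigr => a _ do under eq_bigr => b _ do rewrite tac;
  under eq_bigr => a _ do under eq_bigr => b _ do under eq_bigr => c _ do rewrite tac.

Lemma psi_W (R : realType) (p : nat -> R) A B C D :
  weyl_spinor (W R p) A B C D = psiC R p (A + B + C + D).
Proof.
rewrite ws_red2; apply/eqP; rewrite eq_complex; apply/andP; split; apply/eqP.
- rewrite Re_crM; reim_sum Re_sum.
  under eq_bigr => a _ do under eq_bigr => b _ do under eq_bigr => c _ do under eq_bigr => d _ do rewrite Re_crM.
  rewrite !big4.
  case: (case2 A) => ->; case: (case2 B) => ->; case: (case2 C) => ->; case: (case2 D) => ->;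
  cbv beta iota delta [Sh W psiC nat_of_ord addn addn_rec double double_rec]; simpl; by field.
- rewrite Im_crM; reim_sum Im_sum.
  under eq_bigr => a _ do under eq_bigr => b _ do under eq_bigr => c _ do under eq_bigr => d _ do rewrite Im_crM.
  rewrite !big4.
  case: (case2 A) => ->; case: (case2 B) => ->; case: (case2 C) => ->; case: (case2 D) => ->;
  cbv beta iota delta [Sh W psiC nat_of_ord addn addn_rec double double_rec]; simpl; by field.
Qed.

Lemma sw18 (V : nmodType) (m n : nat)
  (K : 'I_m -> 'I_n -> 'I_n -> 'I_n -> 'I_n -> 'I_n -> 'I_n -> 'I_n -> 'I_n -> V) :
  \sum_(i < m) \sum_(j1 < n) \sum_(j2 < n) \sum_(j3 < n) \sum_(j4 < n)
     \sum_(j5 < n) \sum_(j6 < n) \sum_(j7 < n) \sum_(j8 < n) K i j1 j2 j3 j4 j5 j6 j7 j8 =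
  \sum_(j1 < n) \sum_(j2 < n) \sum_(j3 < n) \sum_(j4 < n)
     \sum_(j5 < n) \sum_(j6 < n) \sum_(j7 < n) \sum_(j8 < n) \sum_(i < m) K i j1 j2 j3 j4 j5 j6 j7 j8.
Proof.
rewrite exchange_big; apply: eq_bigr => j1 _; rewrite exchange_big; apply: eq_bigr => j2 _.
rewrite exchange_big; apply: eq_bigr => j3 _; rewrite exchange_big; apply: eq_bigr => j4 _.
rewrite exchange_big; apply: eq_bigr => j5 _; rewrite exchange_big; apply: eq_bigr => j6 _.
rewrite exchange_big; apply: eq_bigr => j7 _; by rewrite exchange_big.
Qed.

Lemma sum8_distl (V : pzRingType) (k : V)
  (F : 'I_2 -> 'I_2 -> 'I_2 -> 'I_2 -> 'I_2 -> 'I_2 -> 'I_2 -> 'I_2 -> V) :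
  (\sum_(A < 2) \sum_(B < 2) \sum_(C < 2) \sum_(D < 2)
   \sum_(A1 < 2) \sum_(B1 < 2) \sum_(C1 < 2) \sum_(D1 < 2) F A B C D A1 B1 C1 D1) * k =
  \sum_(A < 2) \sum_(B < 2) \sum_(C < 2) \sum_(D < 2)
   \sum_(A1 < 2) \sum_(B1 < 2) \sum_(C1 < 2) \sum_(D1 < 2) (F A B C D A1 B1 C1 D1 * k).
Proof.
rewrite big_distrl; apply: eq_bigr => A _; rewrite big_distrl; apply: eq_bigr => B _.
rewrite big_distrl; apply: eq_bigr => C _; rewrite big_distrl; apply: eq_bigr => D _.
rewrite big_distrl; apply: eq_bigr => A1 _; rewrite big_distrl; apply: eq_bigr => B1 _.
rewrite big_distrl; apply: eq_bigr => C1 _; by rewrite big_distrl.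
Qed.

Lemma prod4 (V : comPzRingType) (x : V) (f g h l : 'I_4 -> V) :
  x * (\sum_(a < 4) f a) * (\sum_(b < 4) g b) * (\sum_(c < 4) h c) * (\sum_(d < 4) l d) =
  \sum_(a < 4) \sum_(b < 4) \sum_(c < 4) \sum_(d < 4) (x * f a * g b * h c * l d).
Proof.
rewrite (big_distrr x) big_distrl big_distrl big_distrl; apply: eq_bigr => a _.
rewrite (big_distrr (x * f a)) big_distrl big_distrl; apply: eq_bigr => b _.
rewrite (big_distrr (x * f a * g b)) big_distrl; apply: eq_bigr => c _.
by rewrite (big_distrr (x * f a * g b * h c)).
Qed.

Lemma G4gen (V : comPzRingType) (Ps Pb : 'I_2 -> 'I_2 -> 'I_2 -> 'I_2 -> V)
  (G : 'I_4 -> 'I_2 -> 'I_2 -> V) (k : 'I_4 -> V) :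
  \sum_(a < 4) \sum_(b < 4) \sum_(c < 4) \sum_(d < 4)
   (\sum_(A < 2) \sum_(B < 2) \sum_(C < 2) \sum_(D < 2)
    \sum_(A1 < 2) \sum_(B1 < 2) \sum_(C1 < 2) \sum_(D1 < 2)
      Ps A B C D * Pb A1 B1 C1 D1 * G a A A1 * G b B B1 * G c C C1 * G d D D1)
   * (k a * k b * k c * k d)
  = \sum_(A < 2) \sum_(B < 2) \sum_(C < 2) \sum_(D < 2)
    \sum_(A1 < 2) \sum_(B1 < 2) \sum_(C1 < 2) \sum_(D1 < 2)
      Ps A B C D * Pb A1 B1 C1 D1 * (\sum_(a < 4) G a A A1 * k a) * (\sum_(b < 4) G b B B1 * k b)
        * (\sum_(c < 4) G c C C1 * k c) * (\sum_(d < 4) G d D D1 * k d).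
Proof.
under eq_bigr => a _ do under eq_bigr => b _ do under eq_bigr => c _ do under eq_bigr => d _ do
  rewrite sum8_distl.
under eq_bigr => a _ do under eq_bigr => b _ do under eq_bigr => c _ do rewrite sw18.
under eq_bigr => a _ do under eq_bigr => b _ do rewrite sw18.
under eq_bigr => a _ do rewrite sw18.
rewrite sw18.
apply: eq_bigr => A _; apply: eq_bigr => B _; apply: eq_bigr => C _; apply: eq_bigr => D _.
apply: eq_bigr => A1 _; apply: eq_bigr => B1 _; apply: eq_bigr => C1 _; apply: eq_bigr => D1 _.
rewrite prod4.
apply: eq_bigr => a _; apply: eq_bigr => b _; apply: eq_bigr => c _; apply: eq_bigr => d _.
ring.
Qed.

Definition tauS {R : realType} (t : 'I_4 -> R) (A A1 : 'I_2) : R[i] :=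
  \sum_(a < 4) sigmaU R a A A1 * cr (t a).

Lemma P1_red (R : realType) (C : tensor4 R) t :
  P1 C t = \sum_(A < 2) \sum_(B < 2) \sum_(C' < 2) \sum_(D < 2)
    \sum_(A1 < 2) \sum_(B1 < 2) \sum_(C1 < 2) \sum_(D1 < 2)
      weyl_spinor C A B C' D * conjc (weyl_spinor C A1 B1 C1 D1) *
      tauS t A A1 * tauS t B B1 * tauS t C' C1 * tauS t D D1.
Proof.
rewrite /P1 /bel_robinson.
under eq_bigr => a _ do under eq_bigr => b _ do under eq_bigr => c _ do under eq_bigr => d _ do
  rewrite !crM.
rewrite /tauS; exact: (@G4gen _ (weyl_spinor C) (fun X Y Z U => conjc (weyl_spinor C X Y Z U)) (sigmaU R) (fun a => cr (t a))).
Qed.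

Definition tauh {R : realType} (t : 'I_4 -> R) (A A1 : 'I_2) : R[i] :=
  match nat_of_ord A, nat_of_ord A1 with
  | 0, 0 => Complex (t o40 + t o43) 0
  | 0, _ => Complex (t o41) (- t o42)
  | _, 0 => Complex (t o41) (t o42)
  | _, _ => Complex (t o40 - t o43) 0
  end.

Lemma tau_cf (R : realType) (t : 'I_4 -> R) A A1 : tauS t A A1 = cr (sq R) * tauh t A A1.
Proof.
rewrite /tauS /sigmaU !big4.
case: (case2 A) => ->; case: (case2 A1) => ->; rewrite ?big4 ?big2 /sigma /epsS /Defs.eta /sq /tauh /=;
apply/eqP; rewrite eq_complex /=; apply/andP; split; apply/eqP; ring.
Qed.

Definition tauv {R : realType} (u v w1 w2 : R) (A A1 : 'I_2) : R[i] :=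
  match nat_of_ord A, nat_of_ord A1 with
  | 0, 0 => Complex u 0
  | 0, _ => Complex w1 (- w2)
  | _, 0 => Complex w1 w2
  | _, _ => Complex v 0
  end.

Definition Gp {R : realType} (p : nat -> R) (u v w1 w2 : R) : R :=
(p 9%N ^+ 2 * v ^+ 4 + p 8%N ^+ 2 * v ^+ 4 + 8%:R * p 7%N * p 9%N * v ^+ 3 * w1 + 8%:R * p 7%N * p 8%N * v ^+ 3 * w2 + 12%:R * p 7%N ^+ 2 * v ^+ 2 * w2 ^+ 2 + 12%:R * p 7%N ^+ 2 * v ^+ 2 * w1 ^+ 2 + 4%:R * p 7%N ^+ 2 * u * v ^+ 3 - 8%:R * p 6%N * p 9%N * v ^+ 3 * w2 + 8%:R * p 6%N * p 8%N * v ^+ 3 * w1 + 12%:R * p 6%N ^+ 2 * v ^+ 2 * w2 ^+ 2 + 12%:R * p 6%N ^+ 2 * v ^+ 2 * w1 ^+ 2 + 4%:R * p 6%N ^+ 2 * u * v ^+ 3 - 12%:R * p 5%N * p 9%N * v ^+ 2 * w2 ^+ 2 + 12%:R * p 5%N * p 9%N * v ^+ 2 * w1 ^+ 2 + 24%:R * p 5%N * p 8%N * v ^+ 2 * w1 * w2 + 24%:R * p 5%N * p 7%N * v * w1 * w2 ^+ 2 + 24%:R * p 5%N * p 7%N * v * w1 ^+ 3 + 24%:R * p 5%N * p 7%N * u * v ^+ 2 * w1 + 24%:R * p 5%N * p 6%N * v * w2 ^+ 3 + 24%:R * p 5%N * p 6%N * v * w1 ^+ 2 * w2 + 24%:R *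 p 5%N * p 6%N * u * v ^+ 2 * w2 + 6%:R * p 5%N ^+ 2 * w2 ^+ 4 + 12%:R * p 5%N ^+ 2 * w1 ^+ 2 * w2 ^+ 2 + 6%:R * p 5%N ^+ 2 * w1 ^+ 4 + 24%:R * p 5%N ^+ 2 * u * v * w2 ^+ 2 + 24%:R * p 5%N ^+ 2 * u * v * w1 ^+ 2 + 6%:R * p 5%N ^+ 2 * u ^+ 2 * v ^+ 2 - 24%:R * p 4%N * p 9%N * v ^+ 2 * w1 * w2 - 12%:R * p 4%N * p 8%N * v ^+ 2 * w2 ^+ 2 + 12%:R * p 4%N * p 8%N * v ^+ 2 * w1 ^+ 2 - 24%:R * p 4%N * p 7%N * v * w2 ^+ 3 - 24%:R * p 4%N * p 7%N * v * w1 ^+ 2 * w2 - 24%:R * p 4%N * p 7%N * u * v ^+ 2 * w2 + 24%:R * p 4%N * p 6%N * v * w1 * w2 ^+ 2 + 24%:R * p 4%N * p 6%N * v * w1 ^+ 3 + 24%:R * p 4%N * p 6%N * u * v ^+ 2 * w1 + 6%:R * p 4%N ^+ 2 * w2 ^+ 4 + 12%:R * p 4%N ^+ 2 * w1 ^+ 2 * w2 ^+ 2 + 6%:R * p 4%N ^+ 2 * w1 ^+ 4 + 24%:R * p 4%N ^+ 2 * u * v * w2 ^+ 2 + 24%:R * p 4%N ^+ 2 * u * v * w1 ^+ 2 + 6%:R * p 4%N ^+ 2 * u ^+ 2 * v ^+ 2 - 24%:R * p 3%N * p 9%N * v * w1 * w2 ^+ 2 + 8%:R * p 3%N * p 9%N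 * v * w1 ^+ 3 - 8%:R * p 3%N * p 8%N * v * w2 ^+ 3 + 24%:R * p 3%N * p 8%N * v * w1 ^+ 2 * w2 - 8%:R * p 3%N * p 7%N * w2 ^+ 4 + 8%:R * p 3%N * p 7%N * w1 ^+ 4 - 24%:R * p 3%N * p 7%N * u * v * w2 ^+ 2 + 24%:R * p 3%N * p 7%N * u * v * w1 ^+ 2 + 16%:R * p 3%N * p 6%N * w1 * w2 ^+ 3 + 16%:R * p 3%N * p 6%N * w1 ^+ 3 * w2 + 48%:R * p 3%N * p 6%N * u * v * w1 * w2 + 24%:R * p 3%N * p 5%N * u * w1 * w2 ^+ 2 + 24%:R * p 3%N * p 5%N * u * w1 ^+ 3 + 24%:R * p 3%N * p 5%N * u ^+ 2 * v * w1 + 24%:R * p 3%N * p 4%N * u * w2 ^+ 3 + 24%:R * p 3%N * p 4%N * u * w1 ^+ 2 * w2 + 24%:R * p 3%N * p 4%N * u ^+ 2 * v * w2 + 12%:R * p 3%N ^+ 2 * u ^+ 2 * w2 ^+ 2 + 12%:R * p 3%N ^+ 2 * u ^+ 2 * w1 ^+ 2 + 4%:R * p 3%N ^+ 2 * u ^+ 3 * v + 8%:R * p 2%N * p 9%N * v * w2 ^+ 3 - 24%:R * p 2%N * p 9%N * v * w1 ^+ 2 * w2 - 24%:R * p 2%N * p 8%N * v * w1 * w2 ^+ 2 + 8%:R * p 2%N * p 8%N * v * w1 ^+ 3 - 16%:R * p 2%N * p 7%N * w1 * w2 ^+ 3 - 16%:R * p 2%N * p 7%N * w1 ^+ 3 *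 w2 - 48%:R * p 2%N * p 7%N * u * v * w1 * w2 - 8%:R * p 2%N * p 6%N * w2 ^+ 4 + 8%:R * p 2%N * p 6%N * w1 ^+ 4 - 24%:R * p 2%N * p 6%N * u * v * w2 ^+ 2 + 24%:R * p 2%N * p 6%N * u * v * w1 ^+ 2 - 24%:R * p 2%N * p 5%N * u * w2 ^+ 3 - 24%:R * p 2%N * p 5%N * u * w1 ^+ 2 * w2 - 24%:R * p 2%N * p 5%N * u ^+ 2 * v * w2 + 24%:R * p 2%N * p 4%N * u * w1 * w2 ^+ 2 + 24%:R * p 2%N * p 4%N * u * w1 ^+ 3 + 24%:R * p 2%N * p 4%N * u ^+ 2 * v * w1 + 12%:R * p 2%N ^+ 2 * u ^+ 2 * w2 ^+ 2 + 12%:R * p 2%N ^+ 2 * u ^+ 2 * w1 ^+ 2 + 4%:R * p 2%N ^+ 2 * u ^+ 3 * v + 2%:R * p 1%N * p 9%N * w2 ^+ 4 - 12%:R * p 1%N * p 9%N * w1 ^+ 2 * w2 ^+ 2 + 2%:R * p 1%N * p 9%N * w1 ^+ 4 - 8%:R * p 1%N * p 8%N * w1 * w2 ^+ 3 + 8%:R * p 1%N * p 8%N * w1 ^+ 3 * w2 - 24%:R * p 1%N * p 7%N * u * w1 * w2 ^+ 2 + 8%:R * p 1%N * p 7%N * u * w1 ^+ 3 - 8%:R * p 1%N * p 6%N * u * w2 ^+ 3 + 24%:R * p 1%N * p 6%N * u * w1 ^+ 2 * w2 - 12%:R * p 1%N * p 5%N * u ^+ 2 * w2 ^+ 2 + 12%:R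 * p 1%N * p 5%N * u ^+ 2 * w1 ^+ 2 + 24%:R * p 1%N * p 4%N * u ^+ 2 * w1 * w2 + 8%:R * p 1%N * p 3%N * u ^+ 3 * w1 + 8%:R * p 1%N * p 2%N * u ^+ 3 * w2 + p 1%N ^+ 2 * u ^+ 4 + 8%:R * p 0%N * p 9%N * w1 * w2 ^+ 3 - 8%:R * p 0%N * p 9%N * w1 ^+ 3 * w2 + 2%:R * p 0%N * p 8%N * w2 ^+ 4 - 12%:R * p 0%N * p 8%N * w1 ^+ 2 * w2 ^+ 2 + 2%:R * p 0%N * p 8%N * w1 ^+ 4 + 8%:R * p 0%N * p 7%N * u * w2 ^+ 3 - 24%:R * p 0%N * p 7%N * u * w1 ^+ 2 * w2 - 24%:R * p 0%N * p 6%N * u * w1 * w2 ^+ 2 + 8%:R * p 0%N * p 6%N * u * w1 ^+ 3 - 24%:R * p 0%N * p 5%N * u ^+ 2 * w1 * w2 - 12%:R * p 0%N * p 4%N * u ^+ 2 * w2 ^+ 2 + 12%:R * p 0%N * p 4%N * u ^+ 2 * w1 ^+ 2 - 8%:R * p 0%N * p 3%N * u ^+ 3 * w2 + 8%:R * p 0%N * p 2%N * u ^+ 3 * w1 + p 0%N ^+ 2 * u ^+ 4).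

Lemma P1_core (R : realType) (p : nat -> R) (s u v w1 w2 : R) :
  \sum_(A < 2) \sum_(B < 2) \sum_(C' < 2) \sum_(D < 2)
    \sum_(A1 < 2) \sum_(B1 < 2) \sum_(C1 < 2) \sum_(D1 < 2)
      psiC R p (A + B + C' + D) * conjc (psiC R p (A1 + B1 + C1 + D1)) *
      (cr s * tauv u v w1 w2 A A1) * (cr s * tauv u v w1 w2 B B1) *
      (cr s * tauv u v w1 w2 C' C1) * (cr s * tauv u v w1 w2 D D1)
  = cr (s ^+ 4 * Gp p u v w1 w2).
Proof.
(under eq_bigr => x1 _ do (under eq_bigr => x2 _ do (under eq_bigr => x3 _ do (under eq_bigr => x4 _ do (under eq_bigr => x5 _ do (under eq_bigr => x6 _ do (under eq_bigr => x7 _ do rewrite big2))))));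
under eq_bigr => x1 _ do (under eq_bigr => x2 _ do (under eq_bigr => x3 _ do (under eq_bigr => x4 _ do (under eq_bigr => x5 _ do (under eq_bigr => x6 _ do rewrite big2)))));
under eq_bigr => x1 _ do (under eq_bigr => x2 _ do (under eq_bigr => x3 _ do (under eq_bigr => x4 _ do (under eq_bigr => x5 _ do rewrite big2))));
under eq_bigr => x1 _ do (under eq_bigr => x2 _ do (under eq_bigr => x3 _ do (under eq_bigr => x4 _ do rewrite big2)));
under eq_bigr => x1 _ do (under eq_bigr => x2 _ do (under eq_bigr => x3 _ do rewrite big2));
under eq_bigr => x1 _ do (under eq_bigr => x2 _ do rewrite big2);
under eq_bigr => x1 _ do rewrite big2;
rewrite big2).
cbv beta iota delta [psiC tauv nat_of_ord addn addn_rec double double_rec].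
apply/eqP; rewrite eq_complex /=; apply/andP; split; apply/eqP.
rewrite /Gp; ring.
ring.
Qed.

Lemma sq4 (R : realType) : sq R ^+ 4 = 4^-1.
Proof.
rewrite (_ : sq R ^+ 4 = (sq R * sq R) * (sq R * sq R)); last ring.
by rewrite sq2 -invfM; congr (_^-1); ring.
Qed.

Lemma P1_W (R : realType) (p : nat -> R) (t : 'I_4 -> R) :
  4%:R * P1 (W R p) t = cr (Gp p (t o40 + t o43) (t o40 - t o43) (t o41) (t o42)).
Proof.
rewrite P1_red.
under eq_bigr => A _ do under eq_bigr => B _ do under eq_bigr => C _ do under eq_bigr => D _ do
  under eq_bigr => A1 _ do under eq_bigr => B1 _ do under eq_bigr => C1 _ do under eq_bigr => D1 _ do
  rewrite !psi_W !tau_cf.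
rewrite /tauh P1_core sq4.
apply/eqP; rewrite eq_complex /=; apply/andP; split; apply/eqP; by field.
Qed.

Definition Ec {R : realType} (C : tensor4 R) (t : 'I_4 -> R) (a d : 'I_4) : R :=
  \sum_(b < 4) \sum_(c < 4) C a b c d * t b * t c.
Definition Phi {R : realType} (X Y : 'I_4 -> 'I_4 -> R) : R :=
  \sum_(a < 4) \sum_(d < 4) Defs.eta R a a * Defs.eta R d d * X a d * Y a d.

Definition Etab {R : realType} (q : nat -> R) (t : 'I_4 -> R) (a d : 'I_4) : R :=
  match nat_of_ord a, nat_of_ord d with
  | 0, 0 => (q 9%N * t o41 * t o42 + (1%:R / 2%:R) * q 8%N * t o42 ^+ 2 - (1%:R / 2%:R) * q 8%N * t o41 ^+ 2 + 2%:R * q 7%N * t o42 * t o43 - 2%:R * q 6%N * t o41 * t o43 - 2%:R * q 4%N * t o43 ^+ 2 + q 4%N * t o42 ^+ 2 + q 4%N * t o41 ^+ 2 + 2%:R * q 3%N * t o42 * t o43 + 2%:R * q 2%N * t o41 * t o43 - q 1%N * t o41 * t o42 + (1%:R / 2%:R) * q 0%N * t o42 ^+ 2 - (1%:R / 2%:R) * q 0%N * t o41 ^+ 2)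
  | 0, 1 => ((1%:R / 2%:R) * q 9%N * t o42 * t o43 - (1%:R / 2%:R) * q 9%N * t o40 * t o42 - (1%:R / 2%:R) * q 8%N * t o41 * t o43 + (1%:R / 2%:R) * q 8%N * t o40 * t o41 + q 7%N * t o41 * t o42 - q 6%N * t o43 ^+ 2 + q 6%N * t o42 ^+ 2 + q 6%N * t o40 * t o43 + 3%:R * q 5%N * t o42 * t o43 - q 4%N * t o40 * t o41 - q 3%N * t o41 * t o42 - q 2%N * t o43 ^+ 2 + q 2%N * t o42 ^+ 2 - q 2%N * t o40 * t o43 + (1%:R / 2%:R) * q 1%N * t o42 * t o43 + (1%:R / 2%:R) * q 1%N * t o40 * t o42 + (1%:R / 2%:R) * q 0%N * t o41 * t o43 + (1%:R / 2%:R) * q 0%N * t o40 * t o41)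
  | 0, 2 => ((1%:R / 2%:R) * q 9%N * t o41 * t o43 - (1%:R / 2%:R) * q 9%N * t o40 * t o41 + (1%:R / 2%:R) * q 8%N * t o42 * t o43 - (1%:R / 2%:R) * q 8%N * t o40 * t o42 + q 7%N * t o43 ^+ 2 - q 7%N * t o41 ^+ 2 - q 7%N * t o40 * t o43 - q 6%N * t o41 * t o42 - 3%:R * q 5%N * t o41 * t o43 - q 4%N * t o40 * t o42 - q 3%N * t o43 ^+ 2 + q 3%N * t o41 ^+ 2 - q 3%N * t o40 * t o43 - q 2%N * t o41 * t o42 + (1%:R / 2%:R) * q 1%N * t o41 * t o43 + (1%:R / 2%:R) * q 1%N * t o40 * t o41 - (1%:R / 2%:R) * q 0%N * t o42 * t o43 - (1%:R / 2%:R) * q 0%N * t o40 * t o42)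
  | 0, 3 => (- q 9%N * t o41 * t o42 - (1%:R / 2%:R) * q 8%N * t o42 ^+ 2 + (1%:R / 2%:R) * q 8%N * t o41 ^+ 2 - q 7%N * t o42 * t o43 - q 7%N * t o40 * t o42 + q 6%N * t o41 * t o43 + q 6%N * t o40 * t o41 + 2%:R * q 4%N * t o40 * t o43 + q 3%N * t o42 * t o43 - q 3%N * t o40 * t o42 + q 2%N * t o41 * t o43 - q 2%N * t o40 * t o41 - q 1%N * t o41 * t o42 + (1%:R / 2%:R) * q 0%N * t o42 ^+ 2 - (1%:R / 2%:R) * q 0%N * t o41 ^+ 2)
  | 1, 0 => ((1%:R / 2%:R) * q 9%N * t o42 * t o43 - (1%:R / 2%:R) * q 9%N * t o40 * t o42 - (1%:R / 2%:R) * q 8%N * t o41 * t o43 + (1%:R / 2%:R) * q 8%N * t o40 * t o41 + q 7%N * t o41 * t o42 - q 6%N * t o43 ^+ 2 + q 6%N * t o42 ^+ 2 + q 6%N * t o40 * t o43 + 3%:R * q 5%N * t o42 * t o43 - q 4%N * t o40 * t o41 - q 3%N * t o41 * t o42 - q 2%N * t o43 ^+ 2 + q 2%N * t o42 ^+ 2 - q 2%N * t o40 * t o43 + (1%:R / 2%:R) * q 1%N * t o42 * t o43 + (1%:R / 2%:R) * q 1%N * t o40 * t o42 + (1%:R / 2%:R) * q 0%N * t o41 * t o43 + (1%:R / 2%:R) * q 0%N * t o40 * t o41)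
  | 1, 1 => (- (1%:R / 2%:R) * q 8%N * t o43 ^+ 2 + q 8%N * t o40 * t o43 - (1%:R / 2%:R) * q 8%N * t o40 ^+ 2 + 2%:R * q 7%N * t o42 * t o43 - 2%:R * q 7%N * t o40 * t o42 - q 4%N * t o43 ^+ 2 + 2%:R * q 4%N * t o42 ^+ 2 + q 4%N * t o40 ^+ 2 + 2%:R * q 3%N * t o42 * t o43 + 2%:R * q 3%N * t o40 * t o42 - (1%:R / 2%:R) * q 0%N * t o43 ^+ 2 - q 0%N * t o40 * t o43 - (1%:R / 2%:R) * q 0%N * t o40 ^+ 2)
  | 1, 2 => ((1%:R / 2%:R) * q 9%N * t o43 ^+ 2 - q 9%N * t o40 * t o43 + (1%:R / 2%:R) * q 9%N * t o40 ^+ 2 - q 7%N * t o41 * t o43 + q 7%N * t o40 * t o41 + q 6%N * t o42 * t o43 - q 6%N * t o40 * t o42 - 2%:R * q 4%N * t o41 * t o42 - q 3%N * t o41 * t o43 - q 3%N * t o40 * t o41 - q 2%N * t o42 * t o43 - q 2%N * t o40 * t o42 - (1%:R / 2%:R) * q 1%N * t o43 ^+ 2 - q 1%N * t o40 * t o43 - (1%:R / 2%:R) * q 1%N * t o40 ^+ 2)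
  | 1, 3 => (- (1%:R / 2%:R) * q 9%N * t o42 * t o43 + (1%:R / 2%:R) * q 9%N * t o40 * t o42 + (1%:R / 2%:R) * q 8%N * t o41 * t o43 - (1%:R / 2%:R) * q 8%N * t o40 * t o41 - q 7%N * t o41 * t o42 - q 6%N * t o42 ^+ 2 + q 6%N * t o40 * t o43 - q 6%N * t o40 ^+ 2 - 3%:R * q 5%N * t o40 * t o42 + q 4%N * t o41 * t o43 - q 3%N * t o41 * t o42 + q 2%N * t o42 ^+ 2 + q 2%N * t o40 * t o43 + q 2%N * t o40 ^+ 2 + (1%:R / 2%:R) * q 1%N * t o42 * t o43 + (1%:R / 2%:R) * q 1%N * t o40 * t o42 + (1%:R / 2%:R) * q 0%N * t o41 * t o43 + (1%:R / 2%:R) * q 0%N * t o40 * t o41)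
  | 2, 0 => ((1%:R / 2%:R) * q 9%N * t o41 * t o43 - (1%:R / 2%:R) * q 9%N * t o40 * t o41 + (1%:R / 2%:R) * q 8%N * t o42 * t o43 - (1%:R / 2%:R) * q 8%N * t o40 * t o42 + q 7%N * t o43 ^+ 2 - q 7%N * t o41 ^+ 2 - q 7%N * t o40 * t o43 - q 6%N * t o41 * t o42 - 3%:R * q 5%N * t o41 * t o43 - q 4%N * t o40 * t o42 - q 3%N * t o43 ^+ 2 + q 3%N * t o41 ^+ 2 - q 3%N * t o40 * t o43 - q 2%N * t o41 * t o42 + (1%:R / 2%:R) * q 1%N * t o41 * t o43 + (1%:R / 2%:R) * q 1%N * t o40 * t o41 - (1%:R / 2%:R) * q 0%N * t o42 * t o43 - (1%:R / 2%:R) * q 0%N * t o40 * t o42)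
  | 2, 1 => ((1%:R / 2%:R) * q 9%N * t o43 ^+ 2 - q 9%N * t o40 * t o43 + (1%:R / 2%:R) * q 9%N * t o40 ^+ 2 - q 7%N * t o41 * t o43 + q 7%N * t o40 * t o41 + q 6%N * t o42 * t o43 - q 6%N * t o40 * t o42 - 2%:R * q 4%N * t o41 * t o42 - q 3%N * t o41 * t o43 - q 3%N * t o40 * t o41 - q 2%N * t o42 * t o43 - q 2%N * t o40 * t o42 - (1%:R / 2%:R) * q 1%N * t o43 ^+ 2 - q 1%N * t o40 * t o43 - (1%:R / 2%:R) * q 1%N * t o40 ^+ 2)
  | 2, 2 => ((1%:R / 2%:R) * q 8%N * t o43 ^+ 2 - q 8%N * t o40 * t o43 + (1%:R / 2%:R) * q 8%N * t o40 ^+ 2 - 2%:R * q 6%N * t o41 * t o43 + 2%:R * q 6%N * t o40 * t o41 - q 4%N * t o43 ^+ 2 + 2%:R * q 4%N * t o41 ^+ 2 + q 4%N * t o40 ^+ 2 + 2%:R * q 2%N * t o41 * t o43 + 2%:R * q 2%N * t o40 * t o41 + (1%:R / 2%:R) * q 0%N * t o43 ^+ 2 + q 0%N * t o40 * t o43 + (1%:R / 2%:R) * q 0%N * t o40 ^+ 2)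
  | 2, 3 => (- (1%:R / 2%:R) * q 9%N * t o41 * t o43 + (1%:R / 2%:R) * q 9%N * t o40 * t o41 - (1%:R / 2%:R) * q 8%N * t o42 * t o43 + (1%:R / 2%:R) * q 8%N * t o40 * t o42 + q 7%N * t o41 ^+ 2 - q 7%N * t o40 * t o43 + q 7%N * t o40 ^+ 2 + q 6%N * t o41 * t o42 + 3%:R * q 5%N * t o40 * t o41 + q 4%N * t o42 * t o43 + q 3%N * t o41 ^+ 2 + q 3%N * t o40 * t o43 + q 3%N * t o40 ^+ 2 - q 2%N * t o41 * t o42 + (1%:R / 2%:R) * q 1%N * t o41 * t o43 + (1%:R / 2%:R) * q 1%N * t o40 * t o41 - (1%:R / 2%:R) * q 0%N * t o42 * t o43 - (1%:R / 2%:R) * q 0%N * t o40 * t o42)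
  | 3, 0 => (- q 9%N * t o41 * t o42 - (1%:R / 2%:R) * q 8%N * t o42 ^+ 2 + (1%:R / 2%:R) * q 8%N * t o41 ^+ 2 - q 7%N * t o42 * t o43 - q 7%N * t o40 * t o42 + q 6%N * t o41 * t o43 + q 6%N * t o40 * t o41 + 2%:R * q 4%N * t o40 * t o43 + q 3%N * t o42 * t o43 - q 3%N * t o40 * t o42 + q 2%N * t o41 * t o43 - q 2%N * t o40 * t o41 - q 1%N * t o41 * t o42 + (1%:R / 2%:R) * q 0%N * t o42 ^+ 2 - (1%:R / 2%:R) * q 0%N * t o41 ^+ 2)
  | 3, 1 => (- (1%:R / 2%:R) * q 9%N * t o42 * t o43 + (1%:R / 2%:R) * q 9%N * t o40 * t o42 + (1%:R / 2%:R) * q 8%N * t o41 * t o43 - (1%:R / 2%:R) * q 8%N * t o40 * t o41 - q 7%N * t o41 * t o42 - q 6%N * t o42 ^+ 2 + q 6%N * t o40 * t o43 - q 6%N * t o40 ^+ 2 - 3%:R * q 5%N * t o40 * t o42 + q 4%N * t o41 * t o43 - q 3%N * t o41 * t o42 + q 2%N * t o42 ^+ 2 + q 2%N * t o40 * t o43 + q 2%N * t o40 ^+ 2 + (1%:R / 2%:R) * q 1%N * t o42 * t o43 + (1%:R / 2%:R) * q 1%N * t o40 * t o42 + (1%:R / 2%:R) * q 0%N * t o41 * t o43 + (1%:R / 2%:R) * q 0%N * t o40 * t o41)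
  | 3, 2 => (- (1%:R / 2%:R) * q 9%N * t o41 * t o43 + (1%:R / 2%:R) * q 9%N * t o40 * t o41 - (1%:R / 2%:R) * q 8%N * t o42 * t o43 + (1%:R / 2%:R) * q 8%N * t o40 * t o42 + q 7%N * t o41 ^+ 2 - q 7%N * t o40 * t o43 + q 7%N * t o40 ^+ 2 + q 6%N * t o41 * t o42 + 3%:R * q 5%N * t o40 * t o41 + q 4%N * t o42 * t o43 + q 3%N * t o41 ^+ 2 + q 3%N * t o40 * t o43 + q 3%N * t o40 ^+ 2 - q 2%N * t o41 * t o42 + (1%:R / 2%:R) * q 1%N * t o41 * t o43 + (1%:R / 2%:R) * q 1%N * t o40 * t o41 - (1%:R / 2%:R) * q 0%N * t o42 * t o43 - (1%:R / 2%:R) * q 0%N * t o40 * t o42)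
  | 3, 3 => (q 9%N * t o41 * t o42 + (1%:R / 2%:R) * q 8%N * t o42 ^+ 2 - (1%:R / 2%:R) * q 8%N * t o41 ^+ 2 + 2%:R * q 7%N * t o40 * t o42 - 2%:R * q 6%N * t o40 * t o41 - q 4%N * t o42 ^+ 2 - q 4%N * t o41 ^+ 2 - 2%:R * q 4%N * t o40 ^+ 2 - 2%:R * q 3%N * t o40 * t o42 - 2%:R * q 2%N * t o40 * t o41 - q 1%N * t o41 * t o42 + (1%:R / 2%:R) * q 0%N * t o42 ^+ 2 - (1%:R / 2%:R) * q 0%N * t o41 ^+ 2)
  | _, _ => 0
  end.

Lemma Ec_tab (R : realType) (q : nat -> R) (t : 'I_4 -> R) a d :
  Ec (W R q) t a d = Etab q t a d.
Proof.
rewrite /Ec !big4.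
case: (case4 a) => [->|[->|[->|->]]]; case: (case4 d) => [->|[->|[->|->]]];
cbv beta iota delta [W Etab nat_of_ord]; by field.
Qed.

Lemma Phi_exp (R : realType) (X Y : 'I_4 -> 'I_4 -> R) : Phi X Y =
  X o40 o40 * Y o40 o40 - X o40 o41 * Y o40 o41 - X o40 o42 * Y o40 o42 - X o40 o43 * Y o40 o43 - X o41 o40 * Y o41 o40 + X o41 o41 * Y o41 o41 + X o41 o42 * Y o41 o42 + X o41 o43 * Y o41 o43 - X o42 o40 * Y o42 o40 + X o42 o41 * Y o42 o41 + X o42 o42 * Y o42 o42 + X o42 o43 * Y o42 o43 - X o43 o40 * Y o43 o40 + X o43 o41 * Y o43 o41 + X o43 o42 * Y o43 o42 + X o43 o43 * Y o43 o43.
Proof. rewrite /Phi !big4 /Defs.eta /=; ring. Qed.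

Lemma G_phi (R : realType) (p : nat -> R) (t : 'I_4 -> R) :
  Gp p (t o40 + t o43) (t o40 - t o43) (t o41) (t o42) =
  Phi (Ec (W R p) t) (Ec (W R p) t) + Phi (Ec (W R (dp R p)) t) (Ec (W R (dp R p)) t).
Proof.
rewrite !Phi_exp !Ec_tab.
cbv beta iota delta [Etab dp nat_of_ord odd predn negb].
rewrite /Gp; by field.
Qed.

Definition Ire {R : realType} (p : nat -> R) : R :=
  2 * p 0%N * p 8%N - 2 * p 1%N * p 9%N - 8 * p 2%N * p 6%N + 8 * p 3%N * p 7%N
  + 6 * p 4%N ^+ 2 - 6 * p 5%N ^+ 2.
Definition Iim {R : realType} (p : nat -> R) : R :=
  2 * p 0%N * p 9%N + 2 * p 1%N * p 8%N - 8 * p 2%N * p 7%N - 8 * p 3%N * p 6%N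
  + 12 * p 4%N * p 5%N.

Lemma invI_W (R : realType) (p : nat -> R) : invI (W R p) = Complex (Ire p) (Iim p).
Proof.
rewrite /invI.
under eq_bigr => x1 _ do (under eq_bigr => x2 _ do (under eq_bigr => x3 _ do (under eq_bigr => x4 _ do rewrite !big2))).
under eq_bigr => x1 _ do (under eq_bigr => x2 _ do (under eq_bigr => x3 _ do rewrite big2)).
under eq_bigr => x1 _ do (under eq_bigr => x2 _ do rewrite big2).
under eq_bigr => x1 _ do rewrite big2.
rewrite big2.
rewrite !psi_W.
cbv beta iota delta [psiC epsS nat_of_ord addn addn_rec double double_rec].
apply/eqP; rewrite eq_complex /=; apply/andP; split; apply/eqP.
rewrite /Ire; ring.
rewrite /Iim; ring.
Qed.

Lemma I_phi (R : realType) (p : nat -> R) (t : 'I_4 -> R) :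
  (minkowski_sq t) ^+ 2 * Ire p =
    Phi (Ec (W R p) t) (Ec (W R p) t) - Phi (Ec (W R (dp R p)) t) (Ec (W R (dp R p)) t) /\
  (minkowski_sq t) ^+ 2 * Iim p = - 2 * Phi (Ec (W R p) t) (Ec (W R (dp R p)) t).
Proof.
rewrite !Phi_exp !Ec_tab /minkowski_sq !big4.
cbv beta iota delta [Etab dp nat_of_ord odd predn negb].
rewrite /Defs.eta /= /Ire /Iim.
split; by field.
Qed.

Definition mp {R : realType} (a11 a12 a13 a21 a22 a23 a31 a32 a33 t0 t1 t2 t3 : R) (i j : nat) : R :=
  match i, j with
  | 1, 1 => t0 ^+ 4 * a11 - t0 ^+ 2 * (t1 * (t1 * a11 + t2 * a21 + t3 * a31) + (a11 * t1 + a12 * t2 + a13 * t3) * t1) + (t1 * a11 * t1 + t1 * a12 * t2 + t1 * a13 * t3 + t2 * a21 * t1 + t2 * a22 * t2 + t2 * a23 * t3 + t3 * a31 * t1 + t3 * a32 * t2 + t3 * a33 * t3) * t1 * t1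
  | 1, 2 => t0 ^+ 4 * a12 - t0 ^+ 2 * (t1 * (t1 * a12 + t2 * a22 + t3 * a32) + (a11 * t1 + a12 * t2 + a13 * t3) * t2) + (t1 * a11 * t1 + t1 * a12 * t2 + t1 * a13 * t3 + t2 * a21 * t1 + t2 * a22 * t2 + t2 * a23 * t3 + t3 * a31 * t1 + t3 * a32 * t2 + t3 * a33 * t3) * t1 * t2
  | 1, 3 => t0 ^+ 4 * a13 - t0 ^+ 2 * (t1 * (t1 * a13 + t2 * a23 + t3 * a33) + (a11 * t1 + a12 * t2 + a13 * t3) * t3) + (t1 * a11 * t1 + t1 * a12 * t2 + t1 * a13 * t3 + t2 * a21 * t1 + t2 * a22 * t2 + t2 * a23 * t3 + t3 * a31 * t1 + t3 * a32 * t2 + t3 * a33 * t3) * t1 * t3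
  | 2, 1 => t0 ^+ 4 * a21 - t0 ^+ 2 * (t2 * (t1 * a11 + t2 * a21 + t3 * a31) + (a21 * t1 + a22 * t2 + a23 * t3) * t1) + (t1 * a11 * t1 + t1 * a12 * t2 + t1 * a13 * t3 + t2 * a21 * t1 + t2 * a22 * t2 + t2 * a23 * t3 + t3 * a31 * t1 + t3 * a32 * t2 + t3 * a33 * t3) * t2 * t1
  | 2, 2 => t0 ^+ 4 * a22 - t0 ^+ 2 * (t2 * (t1 * a12 + t2 * a22 + t3 * a32) + (a21 * t1 + a22 * t2 + a23 * t3) * t2) + (t1 * a11 * t1 + t1 * a12 * t2 + t1 * a13 * t3 + t2 * a21 * t1 + t2 * a22 * t2 + t2 * a23 * t3 + t3 * a31 * t1 + t3 * a32 * t2 + t3 * a33 * t3) * t2 * t2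
  | 2, 3 => t0 ^+ 4 * a23 - t0 ^+ 2 * (t2 * (t1 * a13 + t2 * a23 + t3 * a33) + (a21 * t1 + a22 * t2 + a23 * t3) * t3) + (t1 * a11 * t1 + t1 * a12 * t2 + t1 * a13 * t3 + t2 * a21 * t1 + t2 * a22 * t2 + t2 * a23 * t3 + t3 * a31 * t1 + t3 * a32 * t2 + t3 * a33 * t3) * t2 * t3
  | 3, 1 => t0 ^+ 4 * a31 - t0 ^+ 2 * (t3 * (t1 * a11 + t2 * a21 + t3 * a31) + (a31 * t1 + a32 * t2 + a33 * t3) * t1) + (t1 * a11 * t1 + t1 * a12 * t2 + t1 * a13 * t3 + t2 * a21 * t1 + t2 * a22 * t2 + t2 * a23 * t3 + t3 * a31 * t1 + t3 * a32 * t2 + t3 * a33 * t3) * t3 * t1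
  | 3, 2 => t0 ^+ 4 * a32 - t0 ^+ 2 * (t3 * (t1 * a12 + t2 * a22 + t3 * a32) + (a31 * t1 + a32 * t2 + a33 * t3) * t2) + (t1 * a11 * t1 + t1 * a12 * t2 + t1 * a13 * t3 + t2 * a21 * t1 + t2 * a22 * t2 + t2 * a23 * t3 + t3 * a31 * t1 + t3 * a32 * t2 + t3 * a33 * t3) * t3 * t2
  | 3, 3 => t0 ^+ 4 * a33 - t0 ^+ 2 * (t3 * (t1 * a13 + t2 * a23 + t3 * a33) + (a31 * t1 + a32 * t2 + a33 * t3) * t3) + (t1 * a11 * t1 + t1 * a12 * t2 + t1 * a13 * t3 + t2 * a21 * t1 + t2 * a22 * t2 + t2 * a23 * t3 + t3 * a31 * t1 + t3 * a32 * t2 + t3 * a33 * t3) * t3 * t3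
  | _, _ => 0
  end.

Lemma phi16 (R : realType) (a00 a01 a02 a03 a10 a11 a12 a13 a20 a21 a22 a23 a30 a31 a32 a33 t0 t1 t2 t3 : R) :
  t0 ^+ 2 - t1 ^+ 2 - t2 ^+ 2 - t3 ^+ 2 = 1 ->
  a00 * t0 + a01 * t1 + a02 * t2 + a03 * t3 = 0 ->
  a10 * t0 + a11 * t1 + a12 * t2 + a13 * t3 = 0 ->
  a20 * t0 + a21 * t1 + a22 * t2 + a23 * t3 = 0 ->
  a30 * t0 + a31 * t1 + a32 * t2 + a33 * t3 = 0 ->
  t0 * a00 + t1 * a10 + t2 * a20 + t3 * a30 = 0 ->
  t0 * a01 + t1 * a11 + t2 * a21 + t3 * a31 = 0 ->
  t0 * a02 + t1 * a12 + t2 * a22 + t3 * a32 = 0 ->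
  t0 * a03 + t1 * a13 + t2 * a23 + t3 * a33 = 0 ->
  forall PH : R, PH = a00 ^+ 2 - a01 ^+ 2 - a02 ^+ 2 - a03 ^+ 2 - a10 ^+ 2 + a11 ^+ 2 + a12 ^+ 2 + a13 ^+ 2 - a20 ^+ 2 + a21 ^+ 2 + a22 ^+ 2 + a23 ^+ 2 - a30 ^+ 2 + a31 ^+ 2 + a32 ^+ 2 + a33 ^+ 2 -> 0 <= PH /\ (PH = 0 -> a00 = 0 /\ a01 = 0 /\ a02 = 0 /\ a03 = 0 /\ a10 = 0 /\ a11 = 0 /\ a12 = 0 /\ a13 = 0 /\ a20 = 0 /\ a21 = 0 /\ a22 = 0 /\ a23 = 0 /\ a30 = 0 /\ a31 = 0 /\ a32 = 0 /\ a33 = 0).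
Proof.
move=> hn r0 r1 r2 r3 c0 c1 c2 c3 PH hPH.
have t0nz : t0 != 0.
  apply/eqP => h0; move: hn; rewrite h0; have := sqr_ge0 t1; have := sqr_ge0 t2; have := sqr_ge0 t3; rewrite expr0n /=; lra.
have e00 : a00 = - (a01 * t1 + a02 * t2 + a03 * t3) / t0.
  by apply/(mulIf t0nz); rewrite divfK //; lra.
have e10 : a10 = - (a11 * t1 + a12 * t2 + a13 * t3) / t0.
  by apply/(mulIf t0nz); rewrite divfK //; lra.
have e20 : a20 = - (a21 * t1 + a22 * t2 + a23 * t3) / t0.
  by apply/(mulIf t0nz); rewrite divfK //; lra.
have e30 : a30 = - (a31 * t1 + a32 * t2 + a33 * t3) / t0.
  by apply/(mulIf t0nz); rewrite divfK //; lra.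
have e01 : a01 = - (t1 * a11 + t2 * a21 + t3 * a31) / t0.
  by apply/(mulIf t0nz); rewrite divfK //; lra.
have e02 : a02 = - (t1 * a12 + t2 * a22 + t3 * a32) / t0.
  by apply/(mulIf t0nz); rewrite divfK //; lra.
have e03 : a03 = - (t1 * a13 + t2 * a23 + t3 * a33) / t0.
  by apply/(mulIf t0nz); rewrite divfK //; lra.
clear r0 r1 r2 r3 c0 c1 c2 c3.
subst a00. subst a01 a02 a03 a10 a20 a30.
have key : t0 ^+ 8 * (t0 ^+ 2 - t1 ^+ 2 - t2 ^+ 2 - t3 ^+ 2) ^+ 2 * PH = (t0 ^+ 2 - t1 ^+ 2 - t2 ^+ 2 - t3 ^+ 2) ^+ 2 * ((mp a11 a12 a13 a21 a22 a23 a31 a32 a33 t0 t1 t2 t3 1 1) ^+ 2 + (mp a11 a12 a13 a21 a22 a23 a31 a32 a33 t0 t1 t2 t3 1 2) ^+ 2 + (mp a11 a12 a13 a21 a22 a23 a31 a32 a33 t0 t1 t2 t3 1 3) ^+ 2 + (mp a11 a12 a13 a21 a22 a23 a31 a32 a33 t0 t1 t2 t3 2 1) ^+ 2 + (mp a11 a12 a13 a21 a22 a23 a31 a32 a33 t0 t1 t2 t3 2 2) ^+ 2 + (mp a11 a12 a13 a21 a22 a23 a31 a32 a33 t0 t1 t2 t3 2 3) ^+ 2 + (mp a11 a12 a13 a21 a22 a23 a31 a32 a33 t0 t1 t2 t3 3 1) ^+ 2 + (mp a11 a12 a13 a21 a22 a23 a31 a32 a33 t0 t1 t2 t3 3 2)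 ^+ 2 + (mp a11 a12 a13 a21 a22 a23 a31 a32 a33 t0 t1 t2 t3 3 3) ^+ 2) + (t0 ^+ 2 - t1 ^+ 2 - t2 ^+ 2 - t3 ^+ 2) * ((t1 * mp a11 a12 a13 a21 a22 a23 a31 a32 a33 t0 t1 t2 t3 1 1 + t2 * mp a11 a12 a13 a21 a22 a23 a31 a32 a33 t0 t1 t2 t3 2 1 + t3 * mp a11 a12 a13 a21 a22 a23 a31 a32 a33 t0 t1 t2 t3 3 1) ^+ 2 + (t1 * mp a11 a12 a13 a21 a22 a23 a31 a32 a33 t0 t1 t2 t3 1 2 + t2 * mp a11 a12 a13 a21 a22 a23 a31 a32 a33 t0 t1 t2 t3 2 2 + t3 * mp a11 a12 a13 a21 a22 a23 a31 a32 a33 t0 t1 t2 t3 3 2) ^+ 2 + (t1 * mp a11 a12 a13 a21 a22 a23 a31 a32 a33 t0 t1 t2 t3 1 3 + t2 * mp a11 a12 a13 a21 a22 a23 a31 a32 a33 t0 t1 t2 t3 2 3 + t3 * mp a11 a12 a13 a21 a22 a23 a31 a32 a33 t0 t1 t2 t3 3 3) ^+ 2 + (mp a11 a12 a13 a21 a22 a23 a31 a32 a33 t0 t1 t2 t3 1 1 * t1 + mp a11 a12 a13 a21 a22 a23 a31 a32 a33 t0 t1 t2 t3 1 2 * t2 + mp a11 a12 a13 a21 a22 a23 a31 a32 a33 t0 t1 t2 t3 1 3 * t3) ^+ 2 + (mp a11 a12 a13 a21 a22 a23 a31 a32 a33 t0 t1 t2 t3 2 1 * t1 + mp a11 a12 a13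 a21 a22 a23 a31 a32 a33 t0 t1 t2 t3 2 2 * t2 + mp a11 a12 a13 a21 a22 a23 a31 a32 a33 t0 t1 t2 t3 2 3 * t3) ^+ 2 + (mp a11 a12 a13 a21 a22 a23 a31 a32 a33 t0 t1 t2 t3 3 1 * t1 + mp a11 a12 a13 a21 a22 a23 a31 a32 a33 t0 t1 t2 t3 3 2 * t2 + mp a11 a12 a13 a21 a22 a23 a31 a32 a33 t0 t1 t2 t3 3 3 * t3) ^+ 2) + (t1 * mp a11 a12 a13 a21 a22 a23 a31 a32 a33 t0 t1 t2 t3 1 1 * t1 + t1 * mp a11 a12 a13 a21 a22 a23 a31 a32 a33 t0 t1 t2 t3 1 2 * t2 + t1 * mp a11 a12 a13 a21 a22 a23 a31 a32 a33 t0 t1 t2 t3 1 3 * t3 + t2 * mp a11 a12 a13 a21 a22 a23 a31 a32 a33 t0 t1 t2 t3 2 1 * t1 + t2 * mp a11 a12 a13 a21 a22 a23 a31 a32 a33 t0 t1 t2 t3 2 2 * t2 + t2 * mp a11 a12 a13 a21 a22 a23 a31 a32 a33 t0 t1 t2 t3 2 3 * t3 + t3 * mp a11 a12 a13 a21 a22 a23 a31 a32 a33 t0 t1 t2 t3 3 1 * t1 + t3 * mp a11 a12 a13 a21 a22 a23 a31 a32 a33 t0 t1 t2 t3 3 2 * t2 + t3 * mp a11 a12 a13 a21 a22 a23 a31 a32 a33 t0 t1 t2 t3 3 3 * t3) ^+ 2.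
  by rewrite hPH /mp; field.
rewrite hn expr1n !mul1r mulr1 in key.
have hS2 : 0 <= (t1 * mp a11 a12 a13 a21 a22 a23 a31 a32 a33 t0 t1 t2 t3 1 1 + t2 * mp a11 a12 a13 a21 a22 a23 a31 a32 a33 t0 t1 t2 t3 2 1 + t3 * mp a11 a12 a13 a21 a22 a23 a31 a32 a33 t0 t1 t2 t3 3 1) ^+ 2 + (t1 * mp a11 a12 a13 a21 a22 a23 a31 a32 a33 t0 t1 t2 t3 1 2 + t2 * mp a11 a12 a13 a21 a22 a23 a31 a32 a33 t0 t1 t2 t3 2 2 + t3 * mp a11 a12 a13 a21 a22 a23 a31 a32 a33 t0 t1 t2 t3 3 2) ^+ 2 + (t1 * mp a11 a12 a13 a21 a22 a23 a31 a32 a33 t0 t1 t2 t3 1 3 + t2 * mp a11 a12 a13 a21 a22 a23 a31 a32 a33 t0 t1 t2 t3 2 3 + t3 * mp a11 a12 a13 a21 a22 a23 a31 a32 a33 t0 t1 t2 t3 3 3) ^+ 2 + (mp a11 a12 a13 a21 a22 a23 a31 a32 a33 t0 t1 t2 t3 1 1 * t1 + mp a11 a12 a13 a21 a22 a23 a31 a32 a33 t0 t1 t2 t3 1 2 * t2 + mp a11 a12 a13 a21 a22 a23 a31 a32 a33 t0 t1 t2 t3 1 3 * t3) ^+ 2 + (mp a11 a12 a13 a21 a22 a23 a31 a32 a33 t0 t1 t2 t3 2 1 * t1 + mp a11 a12 a13 a21 a22 a23 a31 a32 a33 t0 t1 t2 t3 2 2 * t2 + mp a11 a12 a13 a21 a22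 a23 a31 a32 a33 t0 t1 t2 t3 2 3 * t3) ^+ 2 + (mp a11 a12 a13 a21 a22 a23 a31 a32 a33 t0 t1 t2 t3 3 1 * t1 + mp a11 a12 a13 a21 a22 a23 a31 a32 a33 t0 t1 t2 t3 3 2 * t2 + mp a11 a12 a13 a21 a22 a23 a31 a32 a33 t0 t1 t2 t3 3 3 * t3) ^+ 2 by rewrite !addr_ge0 // sqr_ge0.
have hS3 : 0 <= (t1 * mp a11 a12 a13 a21 a22 a23 a31 a32 a33 t0 t1 t2 t3 1 1 * t1 + t1 * mp a11 a12 a13 a21 a22 a23 a31 a32 a33 t0 t1 t2 t3 1 2 * t2 + t1 * mp a11 a12 a13 a21 a22 a23 a31 a32 a33 t0 t1 t2 t3 1 3 * t3 + t2 * mp a11 a12 a13 a21 a22 a23 a31 a32 a33 t0 t1 t2 t3 2 1 * t1 + t2 * mp a11 a12 a13 a21 a22 a23 a31 a32 a33 t0 t1 t2 t3 2 2 * t2 + t2 * mp a11 a12 a13 a21 a22 a23 a31 a32 a33 t0 t1 t2 t3 2 3 * t3 + t3 * mp a11 a12 a13 a21 a22 a23 a31 a32 a33 t0 t1 t2 t3 3 1 * t1 + t3 * mp a11 a12 a13 a21 a22 a23 a31 a32 a33 t0 t1 t2 t3 3 2 * t2 + t3 * mp a11 a12 a13 a21 a22 a23 a31 a32 a33 t0 t1 t2 t3 3 3 * t3) ^+ 2 by exact: sqr_ge0.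
have t8 : 0 < t0 ^+ 8 by rewrite (_ : 8%N = (2 * 4)%N) // exprM exprn_gt0 // lt_def sqrf_eq0 t0nz sqr_ge0.
split.
  rewrite -(pmulr_rge0 _ t8) key; by rewrite !addr_ge0 // sqr_ge0.
move=> hz; rewrite hz mulr0 in key.
have s11 : 0 <= (mp a11 a12 a13 a21 a22 a23 a31 a32 a33 t0 t1 t2 t3 1 1) ^+ 2 by exact: sqr_ge0.
have s12 : 0 <= (mp a11 a12 a13 a21 a22 a23 a31 a32 a33 t0 t1 t2 t3 1 2) ^+ 2 by exact: sqr_ge0.
have s13 : 0 <= (mp a11 a12 a13 a21 a22 a23 a31 a32 a33 t0 t1 t2 t3 1 3) ^+ 2 by exact: sqr_ge0.
have s21 : 0 <= (mp a11 a12 a13 a21 a22 a23 a31 a32 a33 t0 t1 t2 t3 2 1) ^+ 2 by exact: sqr_ge0.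
have s22 : 0 <= (mp a11 a12 a13 a21 a22 a23 a31 a32 a33 t0 t1 t2 t3 2 2) ^+ 2 by exact: sqr_ge0.
have s23 : 0 <= (mp a11 a12 a13 a21 a22 a23 a31 a32 a33 t0 t1 t2 t3 2 3) ^+ 2 by exact: sqr_ge0.
have s31 : 0 <= (mp a11 a12 a13 a21 a22 a23 a31 a32 a33 t0 t1 t2 t3 3 1) ^+ 2 by exact: sqr_ge0.
have s32 : 0 <= (mp a11 a12 a13 a21 a22 a23 a31 a32 a33 t0 t1 t2 t3 3 2) ^+ 2 by exact: sqr_ge0.
have s33 : 0 <= (mp a11 a12 a13 a21 a22 a23 a31 a32 a33 t0 t1 t2 t3 3 3) ^+ 2 by exact: sqr_ge0.
have z11 : mp a11 a12 a13 a21 a22 a23 a31 a32 a33 t0 t1 t2 t3 1 1 = 0.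
  apply/eqP; rewrite -sqrf_eq0; apply/eqP; lra.
have z12 : mp a11 a12 a13 a21 a22 a23 a31 a32 a33 t0 t1 t2 t3 1 2 = 0.
  apply/eqP; rewrite -sqrf_eq0; apply/eqP; lra.
have z13 : mp a11 a12 a13 a21 a22 a23 a31 a32 a33 t0 t1 t2 t3 1 3 = 0.
  apply/eqP; rewrite -sqrf_eq0; apply/eqP; lra.
have z21 : mp a11 a12 a13 a21 a22 a23 a31 a32 a33 t0 t1 t2 t3 2 1 = 0.
  apply/eqP; rewrite -sqrf_eq0; apply/eqP; lra.
have z22 : mp a11 a12 a13 a21 a22 a23 a31 a32 a33 t0 t1 t2 t3 2 2 = 0.
  apply/eqP; rewrite -sqrf_eq0; apply/eqP; lra.
have z23 : mp a11 a12 a13 a21 a22 a23 a31 a32 a33 t0 t1 t2 t3 2 3 = 0.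
  apply/eqP; rewrite -sqrf_eq0; apply/eqP; lra.
have z31 : mp a11 a12 a13 a21 a22 a23 a31 a32 a33 t0 t1 t2 t3 3 1 = 0.
  apply/eqP; rewrite -sqrf_eq0; apply/eqP; lra.
have z32 : mp a11 a12 a13 a21 a22 a23 a31 a32 a33 t0 t1 t2 t3 3 2 = 0.
  apply/eqP; rewrite -sqrf_eq0; apply/eqP; lra.
have z33 : mp a11 a12 a13 a21 a22 a23 a31 a32 a33 t0 t1 t2 t3 3 3 = 0.
  apply/eqP; rewrite -sqrf_eq0; apply/eqP; lra.
have x11 : (t0 ^+ 2 - t1 ^+ 2 - t2 ^+ 2 - t3 ^+ 2) ^+ 2 * t0 ^+ 4 * a11 = ((t0 ^+ 2 - t1 ^+ 2 - t2 ^+ 2 - t3 ^+ 2) + t1 * t1) * mp a11 a12 a13 a21 a22 a23 a31 a32 a33 t0 t1 t2 t3 1 1 * ((t0 ^+ 2 - t1 ^+ 2 - t2 ^+ 2 - t3 ^+ 2) + t1 * t1) + ((t0 ^+ 2 - t1 ^+ 2 - t2 ^+ 2 - t3 ^+ 2) + t1 * t1) * mp a11 a12 a13 a21 a22 a23 a31 a32 a33 t0 t1 t2 t3 1 2 * (t2 * t1) + ((t0 ^+ 2 - t1 ^+ 2 - t2 ^+ 2 - t3 ^+ 2) + t1 * t1) * mp a11 a12 a13 a21 a22 a23 a31 a32 a33 t0 t1 t2 t3 1 3 * (t3 * t1) + (t1 * t2) * mp a11 a12 a13 a21 a22 a23 a31 a32 a33 t0 t1 t2 t3 2 1 * ((t0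 ^+ 2 - t1 ^+ 2 - t2 ^+ 2 - t3 ^+ 2) + t1 * t1) + (t1 * t2) * mp a11 a12 a13 a21 a22 a23 a31 a32 a33 t0 t1 t2 t3 2 2 * (t2 * t1) + (t1 * t2) * mp a11 a12 a13 a21 a22 a23 a31 a32 a33 t0 t1 t2 t3 2 3 * (t3 * t1) + (t1 * t3) * mp a11 a12 a13 a21 a22 a23 a31 a32 a33 t0 t1 t2 t3 3 1 * ((t0 ^+ 2 - t1 ^+ 2 - t2 ^+ 2 - t3 ^+ 2) + t1 * t1) + (t1 * t3) * mp a11 a12 a13 a21 a22 a23 a31 a32 a33 t0 t1 t2 t3 3 2 * (t2 * t1) + (t1 * t3) * mp a11 a12 a13 a21 a22 a23 a31 a32 a33 t0 t1 t2 t3 3 3 * (t3 * t1) by rewrite /mp; ring.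
have x12 : (t0 ^+ 2 - t1 ^+ 2 - t2 ^+ 2 - t3 ^+ 2) ^+ 2 * t0 ^+ 4 * a12 = ((t0 ^+ 2 - t1 ^+ 2 - t2 ^+ 2 - t3 ^+ 2) + t1 * t1) * mp a11 a12 a13 a21 a22 a23 a31 a32 a33 t0 t1 t2 t3 1 1 * (t1 * t2) + ((t0 ^+ 2 - t1 ^+ 2 - t2 ^+ 2 - t3 ^+ 2) + t1 * t1) * mp a11 a12 a13 a21 a22 a23 a31 a32 a33 t0 t1 t2 t3 1 2 * ((t0 ^+ 2 - t1 ^+ 2 - t2 ^+ 2 - t3 ^+ 2) + t2 * t2) + ((t0 ^+ 2 - t1 ^+ 2 - t2 ^+ 2 - t3 ^+ 2) + t1 * t1) * mp a11 a12 a13 a21 a22 a23 a31 a32 a33 t0 t1 t2 t3 1 3 * (t3 * t2) + (t1 * t2) * mp a11 a12 a13 a21 a22 a23 a31 a32 a33 t0 t1 t2 t3 2 1 * (t1 * t2) + (t1 * t2) * mp a11 a12 a13 a21 a22 a23 a31 a32 a33 t0 t1 t2 t3 2 2 * ((t0 ^+ 2 - t1 ^+ 2 - t2 ^+ 2 - t3 ^+ 2) + t2 * t2) + (t1 * t2) * mp a11 a12 a13 a21 a22 a23 a31 a32 a33 t0 t1 t2 t3 2 3 * (t3 * t2) + (t1 * t3) * mp a11 a12 a13 a21 a22 a23 a31 a32 a33 t0 t1 t2 t3 3 1 * (t1 * t2) + (t1 * t3) * mp a11 a12 a13 a21 a22 a23 a31 a32 a33 t0 t1 t2 t3 3 2 *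 ((t0 ^+ 2 - t1 ^+ 2 - t2 ^+ 2 - t3 ^+ 2) + t2 * t2) + (t1 * t3) * mp a11 a12 a13 a21 a22 a23 a31 a32 a33 t0 t1 t2 t3 3 3 * (t3 * t2) by rewrite /mp; ring.
have x13 : (t0 ^+ 2 - t1 ^+ 2 - t2 ^+ 2 - t3 ^+ 2) ^+ 2 * t0 ^+ 4 * a13 = ((t0 ^+ 2 - t1 ^+ 2 - t2 ^+ 2 - t3 ^+ 2) + t1 * t1) * mp a11 a12 a13 a21 a22 a23 a31 a32 a33 t0 t1 t2 t3 1 1 * (t1 * t3) + ((t0 ^+ 2 - t1 ^+ 2 - t2 ^+ 2 - t3 ^+ 2) + t1 * t1) * mp a11 a12 a13 a21 a22 a23 a31 a32 a33 t0 t1 t2 t3 1 2 * (t2 * t3) + ((t0 ^+ 2 - t1 ^+ 2 - t2 ^+ 2 - t3 ^+ 2) + t1 * t1) * mp a11 a12 a13 a21 a22 a23 a31 a32 a33 t0 t1 t2 t3 1 3 * ((t0 ^+ 2 - t1 ^+ 2 - t2 ^+ 2 - t3 ^+ 2) + t3 * t3) + (t1 * t2) * mp a11 a12 a13 a21 a22 a23 a31 a32 a33 t0 t1 t2 t3 2 1 * (t1 * t3) + (t1 * t2) * mp a11 a12 a13 a21 a22 a23 a31 a32 a33 t0 t1 t2 t3 2 2 * (t2 * t3) + (t1 * t2) * mp a11 a12 a13 a21 a22 a23 a31 a32 a33 t0 t1 t2 t3 2 3 * ((t0 ^+ 2 - t1 ^+ 2 - t2 ^+ 2 - t3 ^+ 2)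 + t3 * t3) + (t1 * t3) * mp a11 a12 a13 a21 a22 a23 a31 a32 a33 t0 t1 t2 t3 3 1 * (t1 * t3) + (t1 * t3) * mp a11 a12 a13 a21 a22 a23 a31 a32 a33 t0 t1 t2 t3 3 2 * (t2 * t3) + (t1 * t3) * mp a11 a12 a13 a21 a22 a23 a31 a32 a33 t0 t1 t2 t3 3 3 * ((t0 ^+ 2 - t1 ^+ 2 - t2 ^+ 2 - t3 ^+ 2) + t3 * t3) by rewrite /mp; ring.
have x21 : (t0 ^+ 2 - t1 ^+ 2 - t2 ^+ 2 - t3 ^+ 2) ^+ 2 * t0 ^+ 4 * a21 = (t2 * t1) * mp a11 a12 a13 a21 a22 a23 a31 a32 a33 t0 t1 t2 t3 1 1 * ((t0 ^+ 2 - t1 ^+ 2 - t2 ^+ 2 - t3 ^+ 2) + t1 * t1) + (t2 * t1) * mp a11 a12 a13 a21 a22 a23 a31 a32 a33 t0 t1 t2 t3 1 2 * (t2 * t1) + (t2 * t1) * mp a11 a12 a13 a21 a22 a23 a31 a32 a33 t0 t1 t2 t3 1 3 * (t3 * t1) + ((t0 ^+ 2 - t1 ^+ 2 - t2 ^+ 2 - t3 ^+ 2) + t2 * t2) * mp a11 a12 a13 a21 a22 a23 a31 a32 a33 t0 t1 t2 t3 2 1 * ((t0 ^+ 2 - t1 ^+ 2 - t2 ^+ 2 - t3 ^+ 2) + t1 * t1) + ((t0 ^+ 2 - t1 ^+ 2 - t2 ^+ 2 - t3 ^+ 2) + t2 * t2) * mp a11 a12 a13 a21 a22 a23 a31 a32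 a33 t0 t1 t2 t3 2 2 * (t2 * t1) + ((t0 ^+ 2 - t1 ^+ 2 - t2 ^+ 2 - t3 ^+ 2) + t2 * t2) * mp a11 a12 a13 a21 a22 a23 a31 a32 a33 t0 t1 t2 t3 2 3 * (t3 * t1) + (t2 * t3) * mp a11 a12 a13 a21 a22 a23 a31 a32 a33 t0 t1 t2 t3 3 1 * ((t0 ^+ 2 - t1 ^+ 2 - t2 ^+ 2 - t3 ^+ 2) + t1 * t1) + (t2 * t3) * mp a11 a12 a13 a21 a22 a23 a31 a32 a33 t0 t1 t2 t3 3 2 * (t2 * t1) + (t2 * t3) * mp a11 a12 a13 a21 a22 a23 a31 a32 a33 t0 t1 t2 t3 3 3 * (t3 * t1) by rewrite /mp; ring.
have x22 : (t0 ^+ 2 - t1 ^+ 2 - t2 ^+ 2 - t3 ^+ 2) ^+ 2 * t0 ^+ 4 * a22 = (t2 * t1) * mp a11 a12 a13 a21 a22 a23 a31 a32 a33 t0 t1 t2 t3 1 1 * (t1 * t2) + (t2 * t1) * mp a11 a12 a13 a21 a22 a23 a31 a32 a33 t0 t1 t2 t3 1 2 * ((t0 ^+ 2 - t1 ^+ 2 - t2 ^+ 2 - t3 ^+ 2) + t2 * t2) + (t2 * t1) * mp a11 a12 a13 a21 a22 a23 a31 a32 a33 t0 t1 t2 t3 1 3 * (t3 * t2) + ((t0 ^+ 2 - t1 ^+ 2 - t2 ^+ 2 - t3 ^+ 2) + t2 * t2) * mp a11 a12 a13 a21 a22 a23 a31 a32 a33 t0 t1 t2 t3 2 1 * (t1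 * t2) + ((t0 ^+ 2 - t1 ^+ 2 - t2 ^+ 2 - t3 ^+ 2) + t2 * t2) * mp a11 a12 a13 a21 a22 a23 a31 a32 a33 t0 t1 t2 t3 2 2 * ((t0 ^+ 2 - t1 ^+ 2 - t2 ^+ 2 - t3 ^+ 2) + t2 * t2) + ((t0 ^+ 2 - t1 ^+ 2 - t2 ^+ 2 - t3 ^+ 2) + t2 * t2) * mp a11 a12 a13 a21 a22 a23 a31 a32 a33 t0 t1 t2 t3 2 3 * (t3 * t2) + (t2 * t3) * mp a11 a12 a13 a21 a22 a23 a31 a32 a33 t0 t1 t2 t3 3 1 * (t1 * t2) + (t2 * t3) * mp a11 a12 a13 a21 a22 a23 a31 a32 a33 t0 t1 t2 t3 3 2 * ((t0 ^+ 2 - t1 ^+ 2 - t2 ^+ 2 - t3 ^+ 2) + t2 * t2) + (t2 * t3) * mp a11 a12 a13 a21 a22 a23 a31 a32 a33 t0 t1 t2 t3 3 3 * (t3 * t2) by rewrite /mp; ring.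
have x23 : (t0 ^+ 2 - t1 ^+ 2 - t2 ^+ 2 - t3 ^+ 2) ^+ 2 * t0 ^+ 4 * a23 = (t2 * t1) * mp a11 a12 a13 a21 a22 a23 a31 a32 a33 t0 t1 t2 t3 1 1 * (t1 * t3) + (t2 * t1) * mp a11 a12 a13 a21 a22 a23 a31 a32 a33 t0 t1 t2 t3 1 2 * (t2 * t3) + (t2 * t1) * mp a11 a12 a13 a21 a22 a23 a31 a32 a33 t0 t1 t2 t3 1 3 * ((t0 ^+ 2 - t1 ^+ 2 - t2 ^+ 2 - t3 ^+ 2) + t3 * t3) + ((t0 ^+ 2 - t1 ^+ 2 - t2 ^+ 2 - t3 ^+ 2) + t2 * t2) * mp a11 a12 a13 a21 a22 a23 a31 a32 a33 t0 t1 t2 t3 2 1 * (t1 * t3) + ((t0 ^+ 2 - t1 ^+ 2 - t2 ^+ 2 - t3 ^+ 2) + t2 * t2) * mp a11 a12 a13 a21 a22 a23 a31 a32 a33 t0 t1 t2 t3 2 2 * (t2 * t3) + ((t0 ^+ 2 - t1 ^+ 2 - t2 ^+ 2 - t3 ^+ 2) + t2 * t2) * mp a11 a12 a13 a21 a22 a23 a31 a32 a33 t0 t1 t2 t3 2 3 * ((t0 ^+ 2 - t1 ^+ 2 - t2 ^+ 2 - t3 ^+ 2) + t3 * t3) + (t2 * t3) * mp a11 a12 a13 a21 a22 a23 a31 a32 a33 t0 t1 t2 t3 3 1 * (t1 * t3) + (t2 * t3) * mp a11 a12 a13 a21 a22 a23 a31 a32 a33 t0 t1 t2 t3 3 2 *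 (t2 * t3) + (t2 * t3) * mp a11 a12 a13 a21 a22 a23 a31 a32 a33 t0 t1 t2 t3 3 3 * ((t0 ^+ 2 - t1 ^+ 2 - t2 ^+ 2 - t3 ^+ 2) + t3 * t3) by rewrite /mp; ring.
have x31 : (t0 ^+ 2 - t1 ^+ 2 - t2 ^+ 2 - t3 ^+ 2) ^+ 2 * t0 ^+ 4 * a31 = (t3 * t1) * mp a11 a12 a13 a21 a22 a23 a31 a32 a33 t0 t1 t2 t3 1 1 * ((t0 ^+ 2 - t1 ^+ 2 - t2 ^+ 2 - t3 ^+ 2) + t1 * t1) + (t3 * t1) * mp a11 a12 a13 a21 a22 a23 a31 a32 a33 t0 t1 t2 t3 1 2 * (t2 * t1) + (t3 * t1) * mp a11 a12 a13 a21 a22 a23 a31 a32 a33 t0 t1 t2 t3 1 3 * (t3 * t1) + (t3 * t2) * mp a11 a12 a13 a21 a22 a23 a31 a32 a33 t0 t1 t2 t3 2 1 * ((t0 ^+ 2 - t1 ^+ 2 - t2 ^+ 2 - t3 ^+ 2) + t1 * t1) + (t3 * t2) * mp a11 a12 a13 a21 a22 a23 a31 a32 a33 t0 t1 t2 t3 2 2 * (t2 * t1) + (t3 * t2) * mp a11 a12 a13 a21 a22 a23 a31 a32 a33 t0 t1 t2 t3 2 3 * (t3 * t1) + ((t0 ^+ 2 - t1 ^+ 2 - t2 ^+ 2 - t3 ^+ 2) + t3 * t3) * mp a11 a12 a13 a21 a22 a23 a31 a32 a33 t0 t1 t2 t3 3 1 * ((t0 ^+ 2 - t1 ^+ 2 -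 t2 ^+ 2 - t3 ^+ 2) + t1 * t1) + ((t0 ^+ 2 - t1 ^+ 2 - t2 ^+ 2 - t3 ^+ 2) + t3 * t3) * mp a11 a12 a13 a21 a22 a23 a31 a32 a33 t0 t1 t2 t3 3 2 * (t2 * t1) + ((t0 ^+ 2 - t1 ^+ 2 - t2 ^+ 2 - t3 ^+ 2) + t3 * t3) * mp a11 a12 a13 a21 a22 a23 a31 a32 a33 t0 t1 t2 t3 3 3 * (t3 * t1) by rewrite /mp; ring.
have x32 : (t0 ^+ 2 - t1 ^+ 2 - t2 ^+ 2 - t3 ^+ 2) ^+ 2 * t0 ^+ 4 * a32 = (t3 * t1) * mp a11 a12 a13 a21 a22 a23 a31 a32 a33 t0 t1 t2 t3 1 1 * (t1 * t2) + (t3 * t1) * mp a11 a12 a13 a21 a22 a23 a31 a32 a33 t0 t1 t2 t3 1 2 * ((t0 ^+ 2 - t1 ^+ 2 - t2 ^+ 2 - t3 ^+ 2) + t2 * t2) + (t3 * t1) * mp a11 a12 a13 a21 a22 a23 a31 a32 a33 t0 t1 t2 t3 1 3 * (t3 * t2) + (t3 * t2) * mp a11 a12 a13 a21 a22 a23 a31 a32 a33 t0 t1 t2 t3 2 1 * (t1 * t2) + (t3 * t2) * mp a11 a12 a13 a21 a22 a23 a31 a32 a33 t0 t1 t2 t3 2 2 * ((t0 ^+ 2 - t1 ^+ 2 - t2 ^+ 2 - t3 ^+ 2) + t2 * t2) + (t3 * t2) * mp a11 a12 a13 a21 a22 a23 a31 a32 a33 t0 t1 t2 t3 2 3 * (t3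 * t2) + ((t0 ^+ 2 - t1 ^+ 2 - t2 ^+ 2 - t3 ^+ 2) + t3 * t3) * mp a11 a12 a13 a21 a22 a23 a31 a32 a33 t0 t1 t2 t3 3 1 * (t1 * t2) + ((t0 ^+ 2 - t1 ^+ 2 - t2 ^+ 2 - t3 ^+ 2) + t3 * t3) * mp a11 a12 a13 a21 a22 a23 a31 a32 a33 t0 t1 t2 t3 3 2 * ((t0 ^+ 2 - t1 ^+ 2 - t2 ^+ 2 - t3 ^+ 2) + t2 * t2) + ((t0 ^+ 2 - t1 ^+ 2 - t2 ^+ 2 - t3 ^+ 2) + t3 * t3) * mp a11 a12 a13 a21 a22 a23 a31 a32 a33 t0 t1 t2 t3 3 3 * (t3 * t2) by rewrite /mp; ring.
have x33 : (t0 ^+ 2 - t1 ^+ 2 - t2 ^+ 2 - t3 ^+ 2) ^+ 2 * t0 ^+ 4 * a33 = (t3 * t1) * mp a11 a12 a13 a21 a22 a23 a31 a32 a33 t0 t1 t2 t3 1 1 * (t1 * t3) + (t3 * t1) * mp a11 a12 a13 a21 a22 a23 a31 a32 a33 t0 t1 t2 t3 1 2 * (t2 * t3) + (t3 * t1) * mp a11 a12 a13 a21 a22 a23 a31 a32 a33 t0 t1 t2 t3 1 3 * ((t0 ^+ 2 - t1 ^+ 2 - t2 ^+ 2 - t3 ^+ 2) + t3 * t3) + (t3 * t2) * mp a11 a12 a13 a21 a22 a23 a31 a32 a33 t0 t1 t2 t3 2 1 * (t1 * t3) + (t3 * t2) * mp a11 a12 a13 a21 a22 a23 a31 a32 a33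 t0 t1 t2 t3 2 2 * (t2 * t3) + (t3 * t2) * mp a11 a12 a13 a21 a22 a23 a31 a32 a33 t0 t1 t2 t3 2 3 * ((t0 ^+ 2 - t1 ^+ 2 - t2 ^+ 2 - t3 ^+ 2) + t3 * t3) + ((t0 ^+ 2 - t1 ^+ 2 - t2 ^+ 2 - t3 ^+ 2) + t3 * t3) * mp a11 a12 a13 a21 a22 a23 a31 a32 a33 t0 t1 t2 t3 3 1 * (t1 * t3) + ((t0 ^+ 2 - t1 ^+ 2 - t2 ^+ 2 - t3 ^+ 2) + t3 * t3) * mp a11 a12 a13 a21 a22 a23 a31 a32 a33 t0 t1 t2 t3 3 2 * (t2 * t3) + ((t0 ^+ 2 - t1 ^+ 2 - t2 ^+ 2 - t3 ^+ 2) + t3 * t3) * mp a11 a12 a13 a21 a22 a23 a31 a32 a33 t0 t1 t2 t3 3 3 * ((t0 ^+ 2 - t1 ^+ 2 - t2 ^+ 2 - t3 ^+ 2) + t3 * t3) by rewrite /mp; ring.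
rewrite z11 z12 z13 z21 z22 z23 z31 z32 z33 hn in x11 x12 x13 x21 x22 x23 x31 x32 x33.
have {x11}x11 : a11 = 0.
  move: x11; rewrite expr1n mul1r => h.
  have : t0 ^+ 4 * a11 = 0 by rewrite h; ring.
  by move/eqP; rewrite mulf_eq0 expf_eq0 (negbTE t0nz) /= => /eqP.
have {x12}x12 : a12 = 0.
  move: x12; rewrite expr1n mul1r => h.
  have : t0 ^+ 4 * a12 = 0 by rewrite h; ring.
  by move/eqP; rewrite mulf_eq0 expf_eq0 (negbTE t0nz) /= => /eqP.
have {x13}x13 : a13 = 0.
  move: x13; rewrite expr1n mul1r => h.
  have : t0 ^+ 4 * a13 = 0 by rewrite h; ring.
  by move/eqP; rewrite mulf_eq0 expf_eq0 (negbTE t0nz) /= => /eqP.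
have {x21}x21 : a21 = 0.
  move: x21; rewrite expr1n mul1r => h.
  have : t0 ^+ 4 * a21 = 0 by rewrite h; ring.
  by move/eqP; rewrite mulf_eq0 expf_eq0 (negbTE t0nz) /= => /eqP.
have {x22}x22 : a22 = 0.
  move: x22; rewrite expr1n mul1r => h.
  have : t0 ^+ 4 * a22 = 0 by rewrite h; ring.
  by move/eqP; rewrite mulf_eq0 expf_eq0 (negbTE t0nz) /= => /eqP.
have {x23}x23 : a23 = 0.
  move: x23; rewrite expr1n mul1r => h.
  have : t0 ^+ 4 * a23 = 0 by rewrite h; ring.
  by move/eqP; rewrite mulf_eq0 expf_eq0 (negbTE t0nz) /= => /eqP.
have {x31}x31 : a31 = 0.
  move: x31; rewrite expr1n mul1r => h.
  have : t0 ^+ 4 * a31 = 0 by rewrite h; ring.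
  by move/eqP; rewrite mulf_eq0 expf_eq0 (negbTE t0nz) /= => /eqP.
have {x32}x32 : a32 = 0.
  move: x32; rewrite expr1n mul1r => h.
  have : t0 ^+ 4 * a32 = 0 by rewrite h; ring.
  by move/eqP; rewrite mulf_eq0 expf_eq0 (negbTE t0nz) /= => /eqP.
have {x33}x33 : a33 = 0.
  move: x33; rewrite expr1n mul1r => h.
  have : t0 ^+ 4 * a33 = 0 by rewrite h; ring.
  by move/eqP; rewrite mulf_eq0 expf_eq0 (negbTE t0nz) /= => /eqP.
subst a11 a12 a13 a21 a22 a23 a31 a32 a33.
by repeat split; ring.
Qed.

Lemma rot_sum (R : realType) (C : tensor4 R) th (t : 'I_4 -> R) a d :
  \sum_(b < 4) \sum_(c < 4) rotC th C a b c d * t b * t c =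
  cos th * Ec C t a d + sin th * Ec (hdual C) t a d.
Proof.
rewrite /rotC /Ec !mulr_sumr -big_split /=; apply: eq_bigr => b _.
rewrite !mulr_sumr -big_split; apply: eq_bigr => c _ /=; ring.
Qed.

Lemma Ec_row (R : realType) (q : nat -> R) (t : 'I_4 -> R) a :
  \sum_(d < 4) Ec (W R q) t a d * t d = 0.
Proof.
rewrite /Ec !big4.
case: (case4 a) => [->|[->|[->|->]]]; cbv beta iota delta [W nat_of_ord]; by field.
Qed.

Lemma Ec_col (R : realType) (q : nat -> R) (t : 'I_4 -> R) d :
  \sum_(a < 4) t a * Ec (W R q) t a d = 0.
Proof.
rewrite /Ec !big4.
case: (case4 d) => [->|[->|[->|->]]]; cbv beta iota delta [W nat_of_ord]; by field.
Qed.

Lemma Phi_quad (R : realType) (E B : 'I_4 -> 'I_4 -> R) x y :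
  Phi (fun a d => x * E a d + y * B a d) (fun a d => x * E a d + y * B a d) =
  x ^+ 2 * Phi E E + 2 * x * y * Phi E B + y ^+ 2 * Phi B B.
Proof. rewrite /Phi !big4; ring. Qed.

Lemma Phi_lin (R : realType) (E B F : 'I_4 -> 'I_4 -> R) x y :
  Phi (fun a d => x * E a d + y * B a d) F = x * Phi E F + y * Phi B F.
Proof. rewrite /Phi !big4; ring. Qed.

Lemma Phi_sym (R : realType) (E F : 'I_4 -> 'I_4 -> R) : Phi E F = Phi F E.
Proof. rewrite /Phi !big4; ring. Qed.

Lemma Phi0 (R : realType) (E F : 'I_4 -> 'I_4 -> R) :
  (forall a d, E a d = 0) -> Phi E F = 0.
Proof. move=> h; rewrite /Phi !big4 !h; ring. Qed.

Lemma Phi_pos (R : realType) (A : 'I_4 -> 'I_4 -> R) (t : 'I_4 -> R) :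
  minkowski_sq t = 1 ->
  (forall a, \sum_(d < 4) A a d * t d = 0) ->
  (forall d, \sum_(a < 4) t a * A a d = 0) ->
  0 <= Phi A A /\ (Phi A A = 0 -> forall a d, A a d = 0).
Proof.
move=> ht hr hc.
have hn : t o40 ^+ 2 - t o41 ^+ 2 - t o42 ^+ 2 - t o43 ^+ 2 = 1.
  by rewrite -ht /minkowski_sq !big4 /Defs.eta /=; ring.
have r0 := hr o40; have r1 := hr o41; have r2 := hr o42; have r3 := hr o43.
have c0 := hc o40; have c1 := hc o41; have c2 := hc o42; have c3 := hc o43.
rewrite big4 in r0; rewrite big4 in r1; rewrite big4 in r2; rewrite big4 in r3.
rewrite big4 in c0; rewrite big4 in c1; rewrite big4 in c2; rewrite big4 in c3.
have H := @phi16 R _ _ _ _ _ _ _ _ _ _ _ _ _ _ _ _ _ _ _ _ hn r0 r1 r2 r3 c0 c1 c2 c3 (Phi A A).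
have [h1 h2] := H ltac:(rewrite /Phi !big4 /Defs.eta /=; ring).
split => // /h2.
move=> [z00 [z01 [z02 [z03 [z10 [z11 [z12 [z13 [z20 [z21 [z22 [z23 [z30 [z31 [z32 z33]]]]]]]]]]]]]]] a d.
by case: (case4 a) => [->|[->|[->|->]]]; case: (case4 d) => [->|[->|[->|->]]].
Qed.

Lemma lin_row (R : realType) (E B : 'I_4 -> 'I_4 -> R) (t : 'I_4 -> R) x y a :
  \sum_(d < 4) (x * E a d + y * B a d) * t d =
  x * \sum_(d < 4) E a d * t d + y * \sum_(d < 4) B a d * t d.
Proof. rewrite !big4; ring. Qed.
Lemma lin_col (R : realType) (E B : 'I_4 -> 'I_4 -> R) (t : 'I_4 -> R) x y d :
  \sum_(a < 4) t a * (x * E a d + y * B a d) =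
  x * \sum_(a < 4) t a * E a d + y * \sum_(a < 4) t a * B a d.
Proof. rewrite !big4; ring. Qed.

Lemma main_t (R : realType) (p : nat -> R) (t : 'I_4 -> R) : minkowski_sq t = 1 ->
  `|invI (W R p)| <= 4%:R * P1 (W R p) t /\
  (4%:R * P1 (W R p) t = `|invI (W R p)| <->
   exists th : R, forall a d : 'I_4,
     \sum_(b < 4) \sum_(c < 4) rotC th (W R p) a b c d * t b * t c = 0).
Proof.
move=> ht.
have hD : hdual (W R p) = W R (dp R p).
  apply: functional_extensionality => a; apply: functional_extensionality => b.
  apply: functional_extensionality => c; apply: functional_extensionality => d.
  exact: hdual_W.
have hP : 4%:R * P1 (W R p) t =
   cr (Phi (Ec (W R p) t) (Ec (W R p) t) + Phi (Ec (W R (dp R p)) t) (Ec (W R (dp R p)) t)).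
  by rewrite P1_W G_phi.
have [hIre hIim] := I_phi R p t.
rewrite ht expr1n !mul1r in hIre hIim.
have hI := invI_W R p; rewrite hIre hIim in hI.
have hrot : forall th a d, \sum_(b < 4) \sum_(c < 4) rotC th (W R p) a b c d * t b * t c =
   cos th * Ec (W R p) t a d + sin th * Ec (W R (dp R p)) t a d.
  by move=> th a d; rewrite rot_sum hD.
rewrite hP hI; clear hP hI hIre hIim.
move: hrot.
set E := Ec (W R p) t; set B := Ec (W R (dp R p)) t => hrot.
have hQF : forall x y, 0 <= x ^+ 2 * Phi E E + 2 * x * y * Phi E B + y ^+ 2 * Phi B B /\
   (x ^+ 2 * Phi E E + 2 * x * y * Phi E B + y ^+ 2 * Phi B B = 0 ->
    forall a d, x * E a d + y * B a d = 0).
  move=> x y; rewrite -Phi_quad; apply: (@Phi_pos R _ t ht) => [a|d].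
    by rewrite lin_row /E /B !Ec_row !mulr0 addr0.
  by rewrite lin_col /E /B !Ec_col !mulr0 addr0.
move: hQF hrot.
set X := Phi E E; set Y := Phi B B; set Z := Phi E B => hQF hrot.
have hX : 0 <= X by have := (hQF 1 0).1; lra.
have hY : 0 <= Y by have := (hQF 0 1).1; lra.
have hDisc : 0 <= X * Y - Z ^+ 2.
  have [hX0|hXn] := eqVneq X 0.
    have hE0 : forall a d, E a d = 0.
      move=> a d; have := (hQF 1 0).2 ltac:(rewrite hX0; ring) a d; lra.
    have hZ0 : Z = 0 by rewrite /Z Phi0.
    by rewrite hX0 hZ0; lra.
  have hXp : 0 < X by rewrite lt_def hXn hX.
  rewrite -(pmulr_rge0 _ hXp); have := (hQF Z (- X)).1; lra.
have hXY : 0 <= X + Y by lra.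
have hS : 0 <= (X - Y) ^+ 2 + (-2 * Z) ^+ 2 by rewrite addr_ge0 // sqr_ge0.
split.
  rewrite normc_def /= lecE /= eqxx /=.
  rewrite -[X in _ <= X](ger0_norm hXY) -sqrtr_sqr ler_sqrt ?sqr_ge0 //; lra.
rewrite normc_def /=.
have eqv : cr (X + Y) = real_complex R (Num.sqrt ((X - Y) ^+ 2 + (-2 * Z) ^+ 2)) <-> X * Y = Z ^+ 2.
  split.
    case => h; have := sqr_sqrtr hS; rewrite -h; lra.
  move=> h; rewrite (_ : (X - Y) ^+ 2 + (-2 * Z) ^+ 2 = (X + Y) ^+ 2); last by lra.
  by rewrite sqrtr_sqr ger0_norm.
rewrite eqv; clear eqv; split.
  move=> hD0.
  have [hY0|hYn] := eqVneq Y 0.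
    have hB0 : forall a d, B a d = 0.
      move=> a d; have := (hQF 0 1).2 ltac:(rewrite hY0; ring) a d; lra.
    exists (pi / 2) => a d; rewrite hrot hB0 cos_pihalf; ring.
  have hE : forall a d, Y * E a d + - Z * B a d = 0.
    apply: (hQF Y (- Z)).2.
    rewrite (_ : Y ^+ 2 * X + 2 * Y * - Z * Z + (- Z) ^+ 2 * Y = Y * (X * Y - Z ^+ 2)); last by ring.
    by rewrite hD0 subrr mulr0.
  exists (atan (- (Z / Y))) => a d.
  set th := atan _.
  have hc : cos th != 0.
    by rewrite /th cos_atan invr_eq0 sqrtr_eq0 -ltNge ltr_pwDl // sqr_ge0.
  have hs : sin th = - (Z / Y) * cos th.
    have := atanK (- (Z / Y)); rewrite -/th /tan => <-; by rewrite divfK.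
  rewrite hrot hs.
  transitivity (cos th / Y * (Y * E a d + - Z * B a d)); first by field.
  by rewrite hE mulr0.
case=> th hth.
have h0 : forall a d, cos th * E a d + sin th * B a d = 0 by move=> a d; rewrite -hrot.
have e1 : cos th * X + sin th * Z = 0.
  by rewrite /X /Z -[Phi E B]Phi_sym -Phi_lin Phi0.
have e2 : cos th * Z + sin th * Y = 0.
  by rewrite /Y /Z -Phi_lin Phi0.
have hcs := cos2Dsin2 th.
apply/eqP; rewrite -subr_eq0; apply/eqP.
transitivity ((cos th ^+ 2 + sin th ^+ 2) * (X * Y - Z ^+ 2)); first by rewrite hcs mul1r.
rewrite (_ : (cos th ^+ 2 + sin th ^+ 2) * (X * Y - Z ^+ 2) =
   (cos th * X + sin th * Z) * (cos th * Y - sin th * Z) + (cos th * Z + sin th * Y) * (sin th * X - cos th * Z)); last by ring.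
by rewrite e1 e2 !mul0r addr0.
Qed.

Theorem theorem2 (R : realType) (C : tensor4 R) (hC : is_weyl C) :
  (forall t : 'I_4 -> R, minkowski_sq t = 1 -> `|invI C| <= 4%:R * P1 C t)
  /\
  (forall t : 'I_4 -> R, minkowski_sq t = 1 ->
     (4%:R * P1 C t = `|invI C| <->
      exists th : R, forall a d : 'I_4,
        \sum_(b < 4) \sum_(c < 4) rotC th C a b c d * t b * t c = 0)).
Proof.
have hW : C = W R (pC R C).
  apply: functional_extensionality => a; apply: functional_extensionality => b.
  apply: functional_extensionality => c; apply: functional_extensionality => d.
  exact: weyl_param.
rewrite hW.
split => t ht; have := @main_t R (pC R C) t ht; by case.
Qed.
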